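(* Let $N\ge 2$ and let $f:\mathbb{C}\to\mathbb{C}^N$ be the Veronese map $f(\zeta)=\left(\binom{N-1}{k}^{1/2}\zeta^k\right)_{k=0}^{N-1}$, so $|f|^2=(1+|\zeta|^2)^{N-1}$. Define $P_+^0 f=f$, $P_+^{k+1}f=P_+(P_+^k f)$, where $P_+ g=\partial g-g\,\frac{g^\dagger\cdot\partial g}{g^\dagger\cdot g}$, $\partial=\partial/\partial\zeta$, $\bar\partial=\partial/\partial\bar\zeta$, and let $P_k=\frac{P_+^k f\otimes (P_+^k f)^\dagger}{|P_+^k f|^2}$ for $k=0,\dots,N-1$. Let $\alpha_0,\dots,\alpha_{N-2}$ be real constants, not all zero, and $\mathbb{P}=\sum_{k=0}^{N-2}\alpha_kP_k$. Then the induced metric of the associated surface satisfies $g_{++}=\operatorname{tr}(\partial\mathbb{P}\partial\mathbb{P})=0$ and $$g_{+-}=\operatorname{tr}(\partial\mathbb{P}\,\bar\partial\mathbb{P})=\frac{\alpha}{(1+|\zeta|^2)^2}$$ for some positive constant $\alpha$ (depending on $N$ and the $\alpha_k$). Consequently the surface has constant curvature $$K:=-\frac{4}{g_{+-}}\,\partial\bar\partial\ln g_{+-}=\frac{8}{\alpha}.$$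
   Context: Here $\zeta$ is the complex coordinate on the plane obtained from $S^2$ by stereographic projection, $\dagger$ denotes Hermitian conjugation, $g^\dagger\cdot h=\sum_i\bar g^ih^i$, $|g|^2=g^\dagger\cdot g$. The vectors $P_+^kf$ define harmonic maps $S^2\to CP^{N-1}$ (the Veronese sequence). The Hermitian matrix $\mathbb{P}$ defines a surface in $\mathbb{R}^{N^2-1}$ (coordinates: real and imaginary parts of its entries), whose metric components are $g_{++}=\operatorname{tr}(\partial\mathbb{P}\partial\mathbb{P})$, $g_{+-}=\operatorname{tr}(\partial\mathbb{P}\bar\partial\mathbb{P})$, $g_{--}=\overline{g_{++}}$, and whose curvature (when $g_{++}=0$) is $K=-\frac{4}{g_{+-}}\partial\bar\partial\ln g_{+-}$. *)

(* Defs.v *)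
From HB Require Import structures.
From mathcomp Require Import all_boot all_order all_algebra.
From mathcomp Require Import reals normedtype derive exp.
From mathcomp Require Import complex.
Set Implicit Arguments. Unset Strict Implicit. Unset Printing Implicit Defensive.
Import Order.TTheory GRing.Theory Num.Theory numFieldNormedType.Exports.
Local Open Scope ring_scope.
Local Open Scope complex_scope.

(* A (complex-valued) field on the plane: the point is zeta = x + i y. *)

Definition dx (R : realType) (F : R -> R -> R[i]) (x y : R) : R[i] :=
  (derive1 (fun t => @complex.Re R (F t y)) x) +i* (derive1 (fun t => @complex.Im R (F t y)) x).
Definition dy (R : realType) (F : R -> R -> R[i]) (x y : R) : R[i] :=
  (derive1 (fun t => @complex.Re R (F x t)) y) +i* (derive1 (fun t => @complex.Im R (F x t)) y).

Definition del (R : realType) (F : R -> R -> R[i]) (x y : R) : R[i] :=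
  (dx F x y - 'i * dy F x y) / 2%:R.
Definition delb (R : realType) (F : R -> R -> R[i]) (x y : R) : R[i] :=
  (dx F x y + 'i * dy F x y) / 2%:R.

Definition vdel (R : realType) (N : nat) (g : R -> R -> 'I_N -> R[i]) :
  R -> R -> 'I_N -> R[i] := fun x y i => del (fun x' y' => g x' y' i) x y.

Definition herm (R : realType) (N : nat) (g h : 'I_N -> R[i]) : R[i] :=
  \sum_(i < N) conjc (g i) * h i.

Definition Pplus (R : realType) (N : nat) (g : R -> R -> 'I_N -> R[i]) :
  R -> R -> 'I_N -> R[i] :=
  fun x y i => vdel g x y i
                - g x y i * (herm (g x y) (vdel g x y) / herm (g x y) (g x y)).

Definition veronese (R : realType) (N : nat) : R -> R -> 'I_N -> R[i] :=
  fun x y k => ((Num.sqrt ('C(N.-1, k))%:R)%:C) * (x +i* y) ^+ k.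

Definition Pk (R : realType) (N : nat) (k : nat) : R -> R -> 'I_N -> R[i] :=
  iter k (@Pplus R N) (@veronese R N).

Definition proj (R : realType) (N : nat) (g : R -> R -> 'I_N -> R[i]) (x y : R) :
  'M[R[i]]_N :=
  \matrix_(i, j) (g x y i * conjc (g x y j) / herm (g x y) (g x y)).

Definition Pmat (R : realType) (N : nat) (k : nat) (x y : R) : 'M[R[i]]_N :=
  proj (@Pk R N k) x y.

Definition bbP (R : realType) (N : nat) (alpha : 'I_N.-1 -> R) (x y : R) :
  'M[R[i]]_N :=
  \sum_(k < N.-1) ((alpha k)%:C) *: @Pmat R N k x y.

Definition mdel (R : realType) (N : nat) (M : R -> R -> 'M[R[i]]_N) (x y : R) :
  'M[R[i]]_N := \matrix_(i, j) del (fun x' y' => M x' y' i j) x y.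
Definition mdelb (R : realType) (N : nat) (M : R -> R -> 'M[R[i]]_N) (x y : R) :
  'M[R[i]]_N := \matrix_(i, j) delb (fun x' y' => M x' y' i j) x y.

Definition gpp (R : realType) (N : nat) (M : R -> R -> 'M[R[i]]_N) (x y : R) : R[i] :=
  \tr (mdel M x y *m mdel M x y).
Definition gpm (R : realType) (N : nat) (M : R -> R -> 'M[R[i]]_N) (x y : R) : R[i] :=
  \tr (mdel M x y *m mdelb M x y).

(* curvature K = -(4 / g_{+-}) del delb ln g_{+-}; the logarithm is taken of the
   real part of g_{+-} (g_{+-} is real for a Hermitian bbP). *)
Definition curvature (R : realType) (N : nat) (M : R -> R -> 'M[R[i]]_N) (x y : R) : R[i] :=
  - ((4%:R) / gpm M x y) *
    del (delb (fun x' y' => (ln (@complex.Re R (gpm M x' y')))%:C)) x y.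

(* Main.v *)
Require Import Defs.
From HB Require Import structures.
From mathcomp Require Import all_boot all_order all_algebra.
From mathcomp Require Import reals normedtype derive exp.
From mathcomp Require Import complex.
From mathcomp Require Import ring lra.
From mathcomp Require Import realfun.
Set Implicit Arguments. Unset Strict Implicit. Unset Printing Implicit Defensive.
Import Order.TTheory GRing.Theory Num.Theory numFieldNormedType.Exports.
Local Open Scope ring_scope.
Local Open Scope complex_scope.

Section L1.
Variable R : realType.
Local Notation C := R[i].
Local Notation Re := (@complex.Re R).
Local Notation Im := (@complex.Im R).

Lemma eq_fun (T U : Type) (f g : T -> U) : (forall x, f x = g x) -> (fun x => f x) = (fun x => g x).
Proof. by move=> h; apply: boolp.funext. Qed.

Lemma ReM (x y : C) : Re (x * y) = Re x * Re y - Im x * Im y.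
Proof. by case: x => a b; case: y => c d. Qed.
Lemma ImM (x y : C) : Im (x * y) = Re x * Im y + Im x * Re y.
Proof. by case: x => a b; case: y => c d. Qed.
Lemma ReD (x y : C) : Re (x + y) = Re x + Re y.
Proof. by case: x => a b; case: y => c d. Qed.
Lemma ImD (x y : C) : Im (x + y) = Im x + Im y.
Proof. by case: x => a b; case: y => c d. Qed.
Lemma ReN (x : C) : Re (- x) = - Re x.
Proof. by case: x => a b. Qed.
Lemma ImN (x : C) : Im (- x) = - Im x.
Proof. by case: x => a b. Qed.
Lemma ReJ (x : C) : Re (conjc x) = Re x.
Proof. by case: x => a b. Qed.
Lemma ImJ (x : C) : Im (conjc x) = - Im x.
Proof. by case: x => a b. Qed.
Lemma ReV (x : C) : Re (x^-1) = Re x * (Re x * Re x + Im x * Im x)^-1.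
Proof. by case: x => a b /=; rewrite !expr2. Qed.
Lemma ImV (x : C) : Im (x^-1) = - Im x * (Re x * Re x + Im x * Im x)^-1.
Proof. by case: x => a b /=; rewrite mulNr !expr2. Qed.
Lemma cE (x : C) : x = Re x +i* Im x.
Proof. by case: x. Qed.

Lemma rdM (f g : R -> R) t : derivable f t 1 -> derivable g t 1 ->
  derive1 (fun s => f s * g s) t = f t * derive1 g t + g t * derive1 f t.
Proof. move=> hf hg; rewrite !derive1E. by have -> := (@deriveM R R^o f g t 1 hf hg). Qed.
Lemma rdD (f g : R -> R) t : derivable f t 1 -> derivable g t 1 ->
  derive1 (fun s => f s + g s) t = derive1 f t + derive1 g t.
Proof. move=> hf hg; rewrite !derive1E. by have -> := (@deriveD R R^o R^o f g t 1 hf hg). Qed.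
Lemma rdN (f : R -> R) t : derivable f t 1 ->
  derive1 (fun s => - f s) t = - derive1 f t.
Proof. move=> hf; rewrite !derive1E. by have -> := (@deriveN R R^o R^o f t 1 hf). Qed.
Lemma rdB (f g : R -> R) t : derivable f t 1 -> derivable g t 1 ->
  derive1 (fun s => f s - g s) t = derive1 f t - derive1 g t.
Proof. move=> hf hg; rewrite !derive1E. by have -> := (@deriveB R R^o R^o f g t 1 hf hg). Qed.
Lemma rdc (c : R) t : derive1 (fun _ : R => c) t = 0.
Proof. by rewrite derive1E derive_cst. Qed.
Lemma rdid t : derive1 (fun s : R => s) t = 1.
Proof. by rewrite derive1E derive_id. Qed.
Lemma rdV (f : R -> R) t : f t != 0 -> derivable f t 1 ->
  derive1 (fun s => (f s)^-1) t = - (f t) ^- 2 * derive1 f t.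
Proof. move=> h0 hf; rewrite !derive1E. by have -> := (@deriveV R R^o f t 1 h0 hf). Qed.

Lemma rdvM (f g : R -> R) t : derivable f t 1 -> derivable g t 1 ->
  derivable (fun s => f s * g s) t 1.
Proof. move=> hf hg; exact: (@derivableM R R^o f g t 1 hf hg). Qed.
Lemma rdvD (f g : R -> R) t : derivable f t 1 -> derivable g t 1 ->
  derivable (fun s => f s + g s) t 1.
Proof. move=> hf hg; exact: (@derivableD R R^o R^o f g t 1 hf hg). Qed.
Lemma rdvN (f : R -> R) t : derivable f t 1 -> derivable (fun s => - f s) t 1.
Proof. move=> hf; exact: (@derivableN R R^o R^o f t 1 hf). Qed.
Lemma rdvB (f g : R -> R) t : derivable f t 1 -> derivable g t 1 ->
  derivable (fun s => f s - g s) t 1.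
Proof. move=> hf hg; exact: (@derivableB R R^o R^o f g t 1 hf hg). Qed.
Lemma rdvc (c : R) t : derivable (fun _ : R => c) t 1.
Proof. exact: derivable_cst. Qed.
Lemma rdvid t : derivable (fun s : R => s) t 1.
Proof. exact: derivable_id. Qed.
Lemma rdvV (f : R -> R) t : f t != 0 -> derivable f t 1 ->
  derivable (fun s => (f s)^-1) t 1.
Proof. move=> h0 hf; exact: (@derivableV R R^o f t 1 h0 hf). Qed.

Arguments rdM {f g t}. Arguments rdD {f g t}. Arguments rdB {f g t}.
Arguments rdN {f t}. Arguments rdV {f t}.
Arguments rdvM {f g t}. Arguments rdvD {f g t}. Arguments rdvB {f g t}.
Arguments rdvN {f t}. Arguments rdvV {f t}.

Definition Dv (g : R -> C) t :=
  derivable (fun s => Re (g s)) t 1 /\ derivable (fun s => Im (g s)) t 1.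
Definition cd (g : R -> C) t : C :=
  derive1 (fun s => Re (g s)) t +i* derive1 (fun s => Im (g s)) t.

Lemma Dv_cst (c : C) t : Dv (fun _ => c) t.
Proof. by split; apply: rdvc. Qed.
Lemma cd_cst (c : C) t : cd (fun _ => c) t = 0.
Proof. by rewrite /cd !rdc. Qed.
Lemma Dv_id t : Dv (fun s => s%:C) t.
Proof. by split; [apply: rdvid | apply: rdvc]. Qed.
Lemma cd_id t : cd (fun s => s%:C) t = 1.
Proof. by rewrite /cd /= rdid rdc. Qed.

Lemma DvD g h t : Dv g t -> Dv h t -> Dv (fun s => g s + h s) t.
Proof.
move=> [g1 g2] [h1 h2]; split.
  under eq_fun do rewrite ReD. exact: rdvD.
under eq_fun do rewrite ImD. exact: rdvD.
Qed.
Lemma cdD g h t : Dv g t -> Dv h t -> cd (fun s => g s + h s) t = cd g t + cd h t.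
Proof.
move=> [g1 g2] [h1 h2]; rewrite /cd.
have -> : (fun s => Re (g s + h s)) = (fun s => Re (g s) + Re (h s)) by apply: eq_fun => s; rewrite ReD.
have -> : (fun s => Im (g s + h s)) = (fun s => Im (g s) + Im (h s)) by apply: eq_fun => s; rewrite ImD.
by rewrite (rdD g1 h1) (rdD g2 h2).
Qed.
Lemma DvN g t : Dv g t -> Dv (fun s => - g s) t.
Proof.
move=> [g1 g2]; split.
  under eq_fun do rewrite ReN. exact: rdvN.
under eq_fun do rewrite ImN. exact: rdvN.
Qed.
Lemma cdN g t : Dv g t -> cd (fun s => - g s) t = - cd g t.
Proof.
move=> [g1 g2]; rewrite /cd.
have -> : (fun s => Re (- g s)) = (fun s => - Re (g s)) by apply: eq_fun => s; rewrite ReN.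
have -> : (fun s => Im (- g s)) = (fun s => - Im (g s)) by apply: eq_fun => s; rewrite ImN.
by rewrite (rdN g1) (rdN g2).
Qed.
Lemma DvM g h t : Dv g t -> Dv h t -> Dv (fun s => g s * h s) t.
Proof.
move=> [g1 g2] [h1 h2]; split.
  under eq_fun do rewrite ReM. by apply: rdvB; apply: rdvM.
under eq_fun do rewrite ImM. by apply: rdvD; apply: rdvM.
Qed.
Lemma cdM g h t : Dv g t -> Dv h t ->
  cd (fun s => g s * h s) t = cd g t * h t + g t * cd h t.
Proof.
move=> [g1 g2] [h1 h2]; rewrite /cd.
have -> : (fun s => Re (g s * h s)) = (fun s => Re (g s) * Re (h s) - Im (g s) * Im (h s)) by apply: eq_fun => s; rewrite ReM.
have -> : (fun s => Im (g s * h s)) = (fun s => Re (g s) * Im (h s) + Im (g s) * Re (h s)) by apply: eq_fun => s; rewrite ImM.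
rewrite (rdB (rdvM g1 h1) (rdvM g2 h2)) (rdD (rdvM g1 h2) (rdvM g2 h1)).
rewrite (rdM g1 h1) (rdM g2 h2) (rdM g1 h2) (rdM g2 h1).
rewrite [g t]cE [h t]cE /=.
apply/eqP; rewrite eq_complex /=; apply/andP; split; apply/eqP; ring.
Qed.
Lemma DvJ g t : Dv g t -> Dv (fun s => (conjc (g s))) t.
Proof.
move=> [g1 g2]; split.
  under eq_fun do rewrite ReJ. exact: g1.
under eq_fun do rewrite ImJ. exact: rdvN.
Qed.
Lemma cdJ g t : Dv g t -> cd (fun s => (conjc (g s))) t = (conjc (cd g t)).
Proof.
move=> [g1 g2]; rewrite /cd.
have -> : (fun s => Re ((conjc (g s)))) = (fun s => Re (g s)) by apply: eq_fun => s; rewrite ReJ.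
have -> : (fun s => Im ((conjc (g s)))) = (fun s => - Im (g s)) by apply: eq_fun => s; rewrite ImJ.
by rewrite (rdN g2).
Qed.
Lemma DvV g t : (forall s, g s != 0) -> Dv g t -> Dv (fun s => (g s)^-1) t.
Proof.
move=> nz [g1 g2].
have n2 : forall s, Re (g s) * Re (g s) + Im (g s) * Im (g s) != 0.
  move=> s; move: (nz s); rewrite [g s]cE; case: (g s) => a b /=.
  apply: contra => /eqP h; rewrite eq_complex /=.
  have ha : a = 0 by apply/eqP; rewrite -sqrf_eq0; apply/eqP; nra.
  have hb : b = 0 by apply/eqP; rewrite -sqrf_eq0; apply/eqP; nra.
  by rewrite ha hb eqxx.
have dn := @rdvV (fun s => Re (g s) * Re (g s) + Im (g s) * Im (g s)) t (n2 t) (rdvD (rdvM g1 g1) (rdvM g2 g2)).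
split.
  have -> : (fun s => Re ((g s)^-1)) = (fun s => Re (g s) * (Re (g s) * Re (g s) + Im (g s) * Im (g s))^-1)
    by apply: eq_fun => s; rewrite ReV.
  exact: rdvM g1 dn.
have -> : (fun s => Im ((g s)^-1)) = (fun s => - Im (g s) * (Re (g s) * Re (g s) + Im (g s) * Im (g s))^-1)
  by apply: eq_fun => s; rewrite ImV.
exact: rdvM (rdvN g2) dn.
Qed.
Arguments DvD {g h t}. Arguments DvM {g h t}. Arguments DvN {g t}.
Arguments DvJ {g t}. Arguments DvV {g t}.
Arguments cdD {g h t}. Arguments cdM {g h t}. Arguments cdN {g t}. Arguments cdJ {g t}.
Lemma cd_ext g h t : (forall s, g s = h s) -> cd g t = cd h t.
Proof. by move=> e; have -> : g = h by apply: boolp.funext. Qed.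
Lemma cdV g t : (forall s, g s != 0) -> Dv g t ->
  cd (fun s => (g s)^-1) t = - cd g t / (g t) ^+ 2.
Proof.
move=> nz dg.
have dv := DvV nz dg.
have := cdM dg dv.
rewrite (@cd_ext _ (fun _ => 1)); last by move=> s; rewrite mulfV.
rewrite cd_cst => /eqP; rewrite eq_sym addrC addr_eq0 => /eqP h.
apply: (mulfI (nz t)). rewrite h. field. exact: nz.
Qed.
Arguments cdV {g t}.
Lemma Dv_sum (I : Type) (r : seq I) (F : I -> R -> C) t :
  (forall i, Dv (F i) t) -> Dv (fun s => \sum_(i <- r) F i s) t.
Proof.
move=> hF; elim: r => [|a r IH].
  under eq_fun do rewrite big_nil. exact: Dv_cst.
under eq_fun do rewrite big_cons. exact: DvD.
Qed.
Lemma cd_sum (I : Type) (r : seq I) (F : I -> R -> C) t :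
  (forall i, Dv (F i) t) -> cd (fun s => \sum_(i <- r) F i s) t = \sum_(i <- r) cd (F i) t.
Proof.
move=> hF; elim: r => [|a r IH].
  under eq_fun do rewrite big_nil. by rewrite cd_cst big_nil.
under eq_fun do rewrite big_cons. rewrite big_cons cdD //; first by rewrite IH.
exact: Dv_sum.
Qed.
End L1.

Section L2.
Variable R : realType.
Local Notation C := R[i].
Local Notation F2 := (R -> R -> C).
Implicit Types F G : F2.

Lemma funext2 F G : (forall x y, F x y = G x y) -> F = G.
Proof. move=> h; apply: boolp.funext => x; apply: boolp.funext => y; exact: h. Qed.

Definition D1 F := forall x y, Dv (fun t => F t y) x /\ Dv (fun t => F x t) y.

Lemma D1_cst (c : C) : D1 (fun _ _ => c).
Proof. by move=> x y; split; apply: Dv_cst. Qed.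
Lemma D1_x : D1 (fun (x _ : R) => x%:C).
Proof. by move=> x y; split; [apply: Dv_id | apply: Dv_cst]. Qed.
Lemma D1_y : D1 (fun (_ y : R) => y%:C).
Proof. by move=> x y; split; [apply: Dv_cst | apply: Dv_id]. Qed.
Lemma D1D F G : D1 F -> D1 G -> D1 (fun x y => F x y + G x y).
Proof. by move=> hF hG x y; split; [exact: (DvD (hF x y).1 (hG x y).1) | exact: (DvD (hF x y).2 (hG x y).2)]. Qed.
Lemma D1M F G : D1 F -> D1 G -> D1 (fun x y => F x y * G x y).
Proof. by move=> hF hG x y; split; [exact: (DvM (hF x y).1 (hG x y).1) | exact: (DvM (hF x y).2 (hG x y).2)]. Qed.
Lemma D1N F : D1 F -> D1 (fun x y => - F x y).
Proof. by move=> hF x y; split; [exact: (DvN (hF x y).1) | exact: (DvN (hF x y).2)]. Qed.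
Lemma D1J F : D1 F -> D1 (fun x y => (conjc (F x y))).
Proof. by move=> hF x y; split; [exact: (DvJ (hF x y).1) | exact: (DvJ (hF x y).2)]. Qed.
Lemma D1V F : (forall x y, F x y != 0) -> D1 F -> D1 (fun x y => (F x y)^-1).
Proof.
move=> nz hF x y; split.
  exact: (DvV (fun s => nz s y) (hF x y).1).
exact: (DvV (fun s => nz x s) (hF x y).2).
Qed.

Lemma dx_cst (c : C) : dx (fun _ _ => c) = (fun _ _ => 0).
Proof. by apply: funext2 => x y; exact: (cd_cst c x). Qed.
Lemma dy_cst (c : C) : dy (fun _ _ => c) = (fun _ _ => 0).
Proof. by apply: funext2 => x y; exact: (cd_cst c y). Qed.
Lemma dx_x : dx (fun (x _ : R) => x%:C) = (fun _ _ => 1).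
Proof. by apply: funext2 => x y; exact: (cd_id x). Qed.
Lemma dy_x : dy (fun (x _ : R) => x%:C) = (fun _ _ => 0).
Proof. by apply: funext2 => x y; exact: (cd_cst x%:C y). Qed.
Lemma dx_y : dx (fun (_ y : R) => y%:C) = (fun _ _ => 0).
Proof. by apply: funext2 => x y; exact: (cd_cst y%:C x). Qed.
Lemma dy_y : dy (fun (_ y : R) => y%:C) = (fun _ _ => 1).
Proof. by apply: funext2 => x y; exact: (cd_id y). Qed.
Lemma dxD F G : D1 F -> D1 G -> dx (fun x y => F x y + G x y) = fun x y => dx F x y + dx G x y.
Proof. by move=> hF hG; apply: funext2 => x y; exact: (cdD (hF x y).1 (hG x y).1). Qed.
Lemma dyD F G : D1 F -> D1 G -> dy (fun x y => F x y + G x y) = fun x y => dy F x y + dy G x y.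
Proof. by move=> hF hG; apply: funext2 => x y; exact: (cdD (hF x y).2 (hG x y).2). Qed.
Lemma dxM F G : D1 F -> D1 G -> dx (fun x y => F x y * G x y) = fun x y => dx F x y * G x y + F x y * dx G x y.
Proof. by move=> hF hG; apply: funext2 => x y; exact: (cdM (hF x y).1 (hG x y).1). Qed.
Lemma dyM F G : D1 F -> D1 G -> dy (fun x y => F x y * G x y) = fun x y => dy F x y * G x y + F x y * dy G x y.
Proof. by move=> hF hG; apply: funext2 => x y; exact: (cdM (hF x y).2 (hG x y).2). Qed.
Lemma dxN F : D1 F -> dx (fun x y => - F x y) = fun x y => - dx F x y.
Proof. by move=> hF; apply: funext2 => x y; exact: (cdN (hF x y).1). Qed.
Lemma dyN F : D1 F -> dy (fun x y => - F x y) = fun x y => - dy F x y.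
Proof. by move=> hF; apply: funext2 => x y; exact: (cdN (hF x y).2). Qed.
Lemma dxJ F : D1 F -> dx (fun x y => (conjc (F x y))) = fun x y => (conjc (dx F x y)).
Proof. by move=> hF; apply: funext2 => x y; exact: (cdJ (hF x y).1). Qed.
Lemma dyJ F : D1 F -> dy (fun x y => (conjc (F x y))) = fun x y => (conjc (dy F x y)).
Proof. by move=> hF; apply: funext2 => x y; exact: (cdJ (hF x y).2). Qed.
Lemma dxV F : (forall x y, F x y != 0) -> D1 F ->
  dx (fun x y => (F x y)^-1) = fun x y => - dx F x y * ((F x y)^-1 * (F x y)^-1).
Proof.
move=> nz hF; apply: funext2 => x y.
have -> : dx (fun x y => (F x y)^-1) x y = cd (fun t => (F t y)^-1) x by [].
rewrite (cdV (fun s => nz s y) (hF x y).1).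
have h := nz x y.
have -> : dx F x y = cd (fun t => F t y) x by [].
field. exact: h.
Qed.
Lemma dyV F : (forall x y, F x y != 0) -> D1 F ->
  dy (fun x y => (F x y)^-1) = fun x y => - dy F x y * ((F x y)^-1 * (F x y)^-1).
Proof.
move=> nz hF; apply: funext2 => x y.
have -> : dy (fun x y => (F x y)^-1) x y = cd (fun t => (F x t)^-1) y by [].
rewrite (cdV (fun s => nz x s) (hF x y).2).
have h := nz x y.
have -> : dy F x y = cd (fun t => F x t) y by [].
field. exact: h.
Qed.

Opaque dx dy.
Fixpoint good (n : nat) F : Prop :=
  match n with
  | 0 => True
  | n'.+1 => [/\ D1 F, good n' (dx F), good n' (dy F) &
               (if n' is _.+1 then dx (dy F) = dy (dx F) else True)]
  end.

Lemma good_le n F : good n.+1 F -> good n F.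
Proof.
elim: n F => [|n IH] F [h1 h2 h3 h4]; first exact: I.
split; [exact: h1 | exact: IH _ h2 | exact: IH _ h3 |].
by case: n {IH h1 h2 h3} h4 => [|n] h4; [exact: I | exact: h4].
Qed.
Lemma good_D1 n F : good n.+1 F -> D1 F.
Proof. by case. Qed.
Lemma good_dx n F : good n.+1 F -> good n (dx F).
Proof. by case. Qed.
Lemma good_dy n F : good n.+1 F -> good n (dy F).
Proof. by case. Qed.
Lemma good_comm n F : good n.+2 F -> dx (dy F) = dy (dx F).
Proof. by case. Qed.

Lemma good_cst n (c : C) : good n (fun _ _ => c).
Proof.
elim: n c => [//|n IH] c; split; first exact: D1_cst.
- rewrite dx_cst; exact: IH.
- rewrite dy_cst; exact: IH.
- case: n {IH} => [|n]; [exact: I | by rewrite !dy_cst !dx_cst !dy_cst].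
Qed.
Lemma good_x n : good n (fun (x _ : R) => x%:C).
Proof.
case: n => [//|n]; split; first exact: D1_x.
- by rewrite dx_x; apply: good_cst.
- by rewrite dy_x; apply: good_cst.
- case: n => [|n]; [exact: I | by rewrite dy_x dx_x dx_cst dy_cst].
Qed.
Lemma good_y n : good n (fun (_ y : R) => y%:C).
Proof.
case: n => [//|n]; split; first exact: D1_y.
- by rewrite dx_y; apply: good_cst.
- by rewrite dy_y; apply: good_cst.
- case: n => [|n]; [exact: I | by rewrite dy_y dx_y dx_cst dy_cst].
Qed.

Lemma goodD n F G : good n F -> good n G -> good n (fun x y => F x y + G x y).
Proof.
elim: n F G => [//|n IH] F G hF hG.
have dF := good_D1 hF; have dG := good_D1 hG.
split; first exact: D1D.
- rewrite (dxD dF dG); exact: IH (good_dx hF) (good_dx hG).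
- rewrite (dyD dF dG); exact: IH (good_dy hF) (good_dy hG).
case: n IH hF hG => [//|n] IH hF hG.
rewrite (dyD dF dG) (dxD dF dG).
rewrite (dxD (good_D1 (good_dy hF)) (good_D1 (good_dy hG))).
rewrite (dyD (good_D1 (good_dx hF)) (good_D1 (good_dx hG))).
by rewrite (good_comm hF) (good_comm hG).
Qed.
Lemma goodN n F : good n F -> good n (fun x y => - F x y).
Proof.
elim: n F => [//|n IH] F hF.
have dF := good_D1 hF.
split; first exact: D1N.
- rewrite (dxN dF); exact: IH (good_dx hF).
- rewrite (dyN dF); exact: IH (good_dy hF).
case: n IH hF => [//|n] IH hF.
rewrite (dyN dF) (dxN dF) (dxN (good_D1 (good_dy hF))) (dyN (good_D1 (good_dx hF))).
by rewrite (good_comm hF).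
Qed.
Lemma goodJ n F : good n F -> good n (fun x y => (conjc (F x y))).
Proof.
elim: n F => [//|n IH] F hF.
have dF := good_D1 hF.
split; first exact: D1J.
- rewrite (dxJ dF); exact: IH (good_dx hF).
- rewrite (dyJ dF); exact: IH (good_dy hF).
case: n IH hF => [//|n] IH hF.
rewrite (dyJ dF) (dxJ dF) (dxJ (good_D1 (good_dy hF))) (dyJ (good_D1 (good_dx hF))).
by rewrite (good_comm hF).
Qed.
Lemma goodM n F G : good n F -> good n G -> good n (fun x y => F x y * G x y).
Proof.
elim: n F G => [//|n IH] F G hF hG.
have dF := good_D1 hF; have dG := good_D1 hG.
split; first exact: D1M.
- rewrite (dxM dF dG); apply: goodD.
    exact: IH (good_dx hF) (good_le hG).
  exact: IH (good_le hF) (good_dx hG).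
- rewrite (dyM dF dG); apply: goodD.
    exact: IH (good_dy hF) (good_le hG).
  exact: IH (good_le hF) (good_dy hG).
case: n IH hF hG => [//|n] IH hF hG.
have dxF := good_D1 (good_dx hF); have dyF := good_D1 (good_dy hF).
have dxG := good_D1 (good_dx hG); have dyG := good_D1 (good_dy hG).
rewrite (dyM dF dG) (dxM dF dG).
rewrite (dxD (D1M dyF dG) (D1M dF dyG)) (dyD (D1M dxF dG) (D1M dF dxG)).
rewrite (dxM dyF dG) (dxM dF dyG) (dyM dxF dG) (dyM dF dxG).
rewrite (good_comm hF) (good_comm hG).
apply: funext2 => x y; ring.
Qed.
Lemma goodV n F : (forall x y, F x y != 0) -> good n F -> good n (fun x y => (F x y)^-1).
Proof.
move=> nz; elim: n F nz => [//|n IH] F nz hF.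
have dF := good_D1 hF.
have iF := IH F nz (good_le hF).
split; first exact: D1V.
- rewrite (dxV nz dF); apply: goodM; first exact: goodN (good_dx hF).
  exact: goodM.
- rewrite (dyV nz dF); apply: goodM; first exact: goodN (good_dy hF).
  exact: goodM.
case: n IH iF hF => [//|n] IH iF hF.
have dxF := good_D1 (good_dx hF); have dyF := good_D1 (good_dy hF).
have dV := D1V nz dF.
rewrite (dyV nz dF) (dxV nz dF).
rewrite (dxM (D1N dyF) (D1M dV dV)) (dyM (D1N dxF) (D1M dV dV)).
rewrite (dxN dyF) (dyN dxF) (dxM dV dV) (dyM dV dV) (dxV nz dF) (dyV nz dF).
rewrite (good_comm hF).
apply: funext2 => x y; ring.
Qed.
Lemma good_sum n (I : Type) (r : seq I) (F : I -> F2) :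
  (forall i, good n (F i)) -> good n (fun x y => \sum_(i <- r) F i x y).
Proof.
move=> hF; elim: r => [|a r IH].
  have -> : (fun x y => \sum_(i <- [::]) F i x y) = (fun _ _ => 0) by apply: funext2 => x y; rewrite big_nil.
  exact: good_cst.
have -> : (fun x y => \sum_(i <- a :: r) F i x y) = (fun x y => F a x y + \sum_(i <- r) F i x y)
  by apply: funext2 => x y; rewrite big_cons.
exact: goodD.
Qed.

Definition smooth F := forall n, good n F.

Lemma smooth_D1 F : smooth F -> D1 F.
Proof. by move=> h; exact: (good_D1 (h 1%N)). Qed.
Lemma smooth_dx F : smooth F -> smooth (dx F).
Proof. by move=> h n; exact: good_dx (h n.+1). Qed.
Lemma smooth_dy F : smooth F -> smooth (dy F).
Proof. by move=> h n; exact: good_dy (h n.+1). Qed.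
Lemma smooth_comm F : smooth F -> dx (dy F) = dy (dx F).
Proof. by move=> h; exact: good_comm (h 2%N). Qed.
Lemma smooth_cst (c : C) : smooth (fun _ _ => c).
Proof. by move=> n; exact: good_cst. Qed.
Lemma smooth_x : smooth (fun (x _ : R) => x%:C).
Proof. by move=> n; exact: good_x. Qed.
Lemma smooth_y : smooth (fun (_ y : R) => y%:C).
Proof. by move=> n; exact: good_y. Qed.
Lemma smoothD F G : smooth F -> smooth G -> smooth (fun x y => F x y + G x y).
Proof. by move=> hF hG n; exact: goodD. Qed.
Lemma smoothN F : smooth F -> smooth (fun x y => - F x y).
Proof. by move=> hF n; exact: goodN. Qed.
Lemma smoothM F G : smooth F -> smooth G -> smooth (fun x y => F x y * G x y).
Proof. by move=> hF hG n; exact: goodM. Qed.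
Lemma smoothJ F : smooth F -> smooth (fun x y => (conjc (F x y))).
Proof. by move=> hF n; exact: goodJ. Qed.
Lemma smoothV F : (forall x y, F x y != 0) -> smooth F -> smooth (fun x y => (F x y)^-1).
Proof. by move=> nz hF n; exact: goodV. Qed.
Lemma smooth_sum (I : Type) (r : seq I) (F : I -> F2) :
  (forall i, smooth (F i)) -> smooth (fun x y => \sum_(i <- r) F i x y).
Proof. by move=> hF n; apply: good_sum => i; exact: hF. Qed.
Lemma smoothB F G : smooth F -> smooth G -> smooth (fun x y => F x y - G x y).
Proof. by move=> hF hG; apply: smoothD => //; exact: smoothN. Qed.
Lemma smoothX F k : smooth F -> smooth (fun x y => F x y ^+ k).
Proof.
move=> hF; elim: k => [|k IH].
  have -> : (fun x y => F x y ^+ 0) = (fun _ _ => 1) by apply: funext2 => x y; rewrite expr0.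
  exact: smooth_cst.
have -> : (fun x y => F x y ^+ k.+1) = (fun x y => F x y * F x y ^+ k) by apply: funext2 => x y; rewrite exprS.
exact: smoothM.
Qed.
Lemma smooth_ext F G : (forall x y, F x y = G x y) -> smooth F -> smooth G.
Proof. by move=> e; have -> : F = G by apply: funext2. Qed.
End L2.

Section L3.
Variable R : realType.
Local Notation C := R[i].
Local Notation F2 := (R -> R -> C).
Implicit Types F G : F2.

Lemma smooth_del F : smooth F -> smooth (del F).
Proof.
move=> hF; apply: smoothM; last exact: smooth_cst.
apply: smoothB; first exact: smooth_dx.
apply: smoothM; [exact: smooth_cst | exact: smooth_dy].
Qed.
Lemma smooth_delb F : smooth F -> smooth (delb F).
Proof.
move=> hF; apply: smoothM; last exact: smooth_cst.
apply: smoothD; first exact: smooth_dx.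
apply: smoothM; [exact: smooth_cst | exact: smooth_dy].
Qed.

Lemma delE F x y : del F x y = (dx F x y - 'i * dy F x y) / 2%:R.
Proof. by []. Qed.
Lemma delbE F x y : delb F x y = (dx F x y + 'i * dy F x y) / 2%:R.
Proof. by []. Qed.
Lemma delD F G : smooth F -> smooth G ->
  del (fun x y => F x y + G x y) = fun x y => del F x y + del G x y.
Proof.
move=> /smooth_D1 hF /smooth_D1 hG; apply: funext2 => x y.
by rewrite /del (dxD hF hG) (dyD hF hG) /=; ring.
Qed.
Lemma delbD F G : smooth F -> smooth G ->
  delb (fun x y => F x y + G x y) = fun x y => delb F x y + delb G x y.
Proof.
move=> /smooth_D1 hF /smooth_D1 hG; apply: funext2 => x y.
by rewrite /delb (dxD hF hG) (dyD hF hG) /=; ring.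
Qed.
Lemma delN F : smooth F -> del (fun x y => - F x y) = fun x y => - del F x y.
Proof.
move=> /smooth_D1 hF; apply: funext2 => x y.
by rewrite /del (dxN hF) (dyN hF) /=; ring.
Qed.
Lemma delbN F : smooth F -> delb (fun x y => - F x y) = fun x y => - delb F x y.
Proof.
move=> /smooth_D1 hF; apply: funext2 => x y.
by rewrite /delb (dxN hF) (dyN hF) /=; ring.
Qed.
Lemma delM F G : smooth F -> smooth G ->
  del (fun x y => F x y * G x y) = fun x y => del F x y * G x y + F x y * del G x y.
Proof.
move=> /smooth_D1 hF /smooth_D1 hG; apply: funext2 => x y.
by rewrite /del (dxM hF hG) (dyM hF hG) /=; ring.
Qed.
Lemma delbM F G : smooth F -> smooth G ->
  delb (fun x y => F x y * G x y) = fun x y => delb F x y * G x y + F x y * delb G x y.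
Proof.
move=> /smooth_D1 hF /smooth_D1 hG; apply: funext2 => x y.
by rewrite /delb (dxM hF hG) (dyM hF hG) /=; ring.
Qed.
Lemma del_cst (c : C) : del (fun _ _ => c) = fun _ _ => 0.
Proof. by apply: funext2 => x y; rewrite /del dx_cst dy_cst /=; ring. Qed.
Lemma delb_cst (c : C) : delb (fun _ _ => c) = fun _ _ => 0.
Proof. by apply: funext2 => x y; rewrite /delb dx_cst dy_cst /=; ring. Qed.

Lemma conj_i : (conjc ('i : C)) = - 'i.
Proof. by apply/eqP; rewrite eq_complex /= oppr0 !eqxx. Qed.
Lemma conj_half : (conjc ((2%:R : C)^-1)) = (2%:R)^-1.
Proof. by rewrite conjc_inv conjc_nat. Qed.

Lemma conjD (a b : C) : (conjc (a + b)) = (conjc a) + (conjc b).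
Proof. by rewrite rmorphD. Qed.
Lemma conjB (a b : C) : (conjc (a - b)) = (conjc a) - (conjc b).
Proof. by rewrite rmorphB. Qed.
Lemma conjM (a b : C) : (conjc (a * b)) = (conjc a) * (conjc b).
Proof. by rewrite rmorphM. Qed.
Lemma conjN (a : C) : (conjc (- a)) = - (conjc a).
Proof. by rewrite rmorphN. Qed.
Lemma conjV (a : C) : (conjc (a^-1)) = ((conjc a))^-1.
Proof. by rewrite conjc_inv. Qed.
Lemma conjR (a : R) : (conjc (a%:C)) = a%:C.
Proof. by rewrite conjc_real. Qed.

Lemma delJ F : smooth F -> del (fun x y => (conjc (F x y))) = fun x y => (conjc (delb F x y)).
Proof.
move=> /smooth_D1 hF; apply: funext2 => x y.
rewrite /del /delb (dxJ hF) (dyJ hF); cbv beta.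
by rewrite !conjM conjD conjM conj_i conj_half; ring.
Qed.
Lemma delbJ F : smooth F -> delb (fun x y => (conjc (F x y))) = fun x y => (conjc (del F x y)).
Proof.
move=> /smooth_D1 hF; apply: funext2 => x y.
rewrite /del /delb (dxJ hF) (dyJ hF); cbv beta.
by rewrite !conjM conjB conjM conj_i conj_half; ring.
Qed.
Lemma delV F : (forall x y, F x y != 0) -> smooth F ->
  del (fun x y => (F x y)^-1) = fun x y => - del F x y * ((F x y)^-1 * (F x y)^-1).
Proof.
move=> nz /smooth_D1 hF; apply: funext2 => x y.
by rewrite /del (dxV nz hF) (dyV nz hF) /=; ring.
Qed.
Lemma delbV F : (forall x y, F x y != 0) -> smooth F ->
  delb (fun x y => (F x y)^-1) = fun x y => - delb F x y * ((F x y)^-1 * (F x y)^-1).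
Proof.
move=> nz /smooth_D1 hF; apply: funext2 => x y.
by rewrite /delb (dxV nz hF) (dyV nz hF) /=; ring.
Qed.
Lemma del_sum (I : Type) (r : seq I) (F : I -> F2) :
  (forall i, smooth (F i)) ->
  del (fun x y => \sum_(i <- r) F i x y) = fun x y => \sum_(i <- r) del (F i) x y.
Proof.
move=> hF; elim: r => [|a r IH].
  have -> : (fun x y => \sum_(i <- [::]) F i x y) = (fun _ _ => 0) by apply: funext2 => x y; rewrite big_nil.
  by rewrite del_cst; apply: funext2 => x y; rewrite big_nil.
have -> : (fun x y => \sum_(i <- a :: r) F i x y) = (fun x y => F a x y + \sum_(i <- r) F i x y)
  by apply: funext2 => x y; rewrite big_cons.
rewrite delD //; last exact: smooth_sum.
by rewrite IH; apply: funext2 => x y; rewrite big_cons.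
Qed.
Lemma delb_sum (I : Type) (r : seq I) (F : I -> F2) :
  (forall i, smooth (F i)) ->
  delb (fun x y => \sum_(i <- r) F i x y) = fun x y => \sum_(i <- r) delb (F i) x y.
Proof.
move=> hF; elim: r => [|a r IH].
  have -> : (fun x y => \sum_(i <- [::]) F i x y) = (fun _ _ => 0) by apply: funext2 => x y; rewrite big_nil.
  by rewrite delb_cst; apply: funext2 => x y; rewrite big_nil.
have -> : (fun x y => \sum_(i <- a :: r) F i x y) = (fun x y => F a x y + \sum_(i <- r) F i x y)
  by apply: funext2 => x y; rewrite big_cons.
rewrite delbD //; last exact: smooth_sum.
by rewrite IH; apply: funext2 => x y; rewrite big_cons.
Qed.

Definition Z : F2 := fun x y => x +i* y.
Lemma ZE : Z = fun x y => x%:C + 'i * y%:C.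
Proof. apply: funext2 => x y; apply/eqP; rewrite eq_complex /=; apply/andP; split; apply/eqP; ring. Qed.
Lemma smoothZ : smooth Z.
Proof. rewrite ZE; apply: smoothD; [exact: smooth_x | apply: smoothM; [exact: smooth_cst | exact: smooth_y]]. Qed.
Lemma del_x : del (fun (x _ : R) => x%:C) = fun _ _ => 2%:R^-1.
Proof. by apply: funext2 => x y; rewrite /del dx_x dy_x /=; ring. Qed.
Lemma delb_x : delb (fun (x _ : R) => x%:C) = fun _ _ => 2%:R^-1.
Proof. by apply: funext2 => x y; rewrite /delb dx_x dy_x /=; ring. Qed.
Lemma del_y : del (fun (_ y : R) => y%:C) = fun _ _ => - 'i / 2%:R.
Proof. by apply: funext2 => x y; rewrite /del dx_y dy_y /=; ring. Qed.
Lemma delb_y : delb (fun (_ y : R) => y%:C) = fun _ _ => 'i / 2%:R.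
Proof. by apply: funext2 => x y; rewrite /delb dx_y dy_y /=; ring. Qed.
Lemma i2 : ('i : C) * 'i = -1.
Proof. apply/eqP; rewrite eq_complex /=; apply/andP; split; apply/eqP; ring. Qed.
Lemma two_nz : (2%:R : C) != 0.
Proof. by rewrite pnatr_eq0. Qed.
Lemma smooth_x' : smooth (fun (x _ : R) => x%:C). Proof. exact: smooth_x. Qed.
Lemma smooth_y' : smooth (fun (_ y : R) => y%:C). Proof. exact: smooth_y. Qed.
Lemma smooth_iy : smooth (fun (_ y : R) => 'i * y%:C).
Proof. apply: smoothM; [exact: smooth_cst | exact: smooth_y]. Qed.
Lemma del_Z : del Z = fun _ _ => 1.
Proof.
rewrite ZE (delD smooth_x' smooth_iy) (delM (smooth_cst _) smooth_y').
rewrite del_x del_cst del_y; apply: funext2 => x y; cbv beta.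
have e : ('i : C) * (- 'i / 2%:R) = 2%:R^-1 by rewrite mulrA mulrN i2 opprK mul1r.
rewrite mul0r add0r e. by field.
Qed.
Lemma delb_Z : delb Z = fun _ _ => 0.
Proof.
rewrite ZE (delbD smooth_x' smooth_iy) (delbM (smooth_cst _) smooth_y').
rewrite delb_x delb_cst delb_y; apply: funext2 => x y; cbv beta.
have e : ('i : C) * ('i / 2%:R) = - 2%:R^-1 by rewrite mulrA i2 mulN1r.
rewrite mul0r add0r e. by rewrite subrr.
Qed.
Definition Zb : F2 := fun x y => conjc (Z x y).
Lemma smoothZb : smooth Zb.
Proof. exact: smoothJ smoothZ. Qed.
Lemma del_Zb : del Zb = fun _ _ => 0.
Proof. rewrite /Zb (delJ smoothZ) delb_Z; apply: funext2 => x y; exact: conjc0. Qed.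
Lemma delb_Zb : delb Zb = fun _ _ => 1.
Proof. rewrite /Zb (delbJ smoothZ) del_Z; apply: funext2 => x y; exact: conjc1. Qed.

Lemma del_delb F : smooth F -> del (delb F) = delb (del F).
Proof.
move=> hF.
have e1 : delb F = fun x y => (dx F x y + 'i * dy F x y) * 2%:R^-1 by [].
have e2 : del F = fun x y => (dx F x y + (- 'i) * dy F x y) * 2%:R^-1.
  by apply: funext2 => x y; rewrite /del mulNr.
have hx := smooth_dx hF; have hy := smooth_dy hF.
have s1 : smooth (fun x y => 'i * dy F x y) by apply: smoothM; [exact: smooth_cst|].
have s1' : smooth (fun x y => - 'i * dy F x y) by apply: smoothM; [exact: smooth_cst|].
rewrite e1 e2.
rewrite (delM (smoothD hx s1) (smooth_cst _)) (delbM (smoothD hx s1') (smooth_cst _)).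
rewrite (delD hx s1) (delbD hx s1') (delM (smooth_cst _) hy) (delbM (smooth_cst _) hy).
rewrite !del_cst !delb_cst; apply: funext2 => x y; cbv beta.
rewrite !delE !delbE (smooth_comm hF).
move: (dx (dx F) x y) (dy (dx F) x y) (dy (dy F) x y) => a b c; ring.
Qed.

Variable N : nat.
Local Notation V2 := (R -> R -> 'I_N -> C).
Implicit Types g h : V2.
Definition smoothv g := forall i, smooth (fun x y => g x y i).
Definition vdelb g : V2 := fun x y i => delb (fun x' y' => g x' y' i) x y.
Definition hermF g h : F2 := fun x y => herm (g x y) (h x y).

Lemma smooth_herm g h : smoothv g -> smoothv h -> smooth (hermF g h).
Proof.
move=> hg hh; apply: (@smooth_sum _ _ _ (fun i x y => conjc (g x y i) * h x y i)) => i.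
apply: smoothM; [exact: smoothJ | exact: hh].
Qed.
Lemma smoothv_del g : smoothv g -> smoothv (vdel g).
Proof. by move=> hg i; apply: smooth_del. Qed.
Lemma smoothv_delb g : smoothv g -> smoothv (vdelb g).
Proof. by move=> hg i; apply: smooth_delb. Qed.

Lemma del_herm g h : smoothv g -> smoothv h ->
  del (hermF g h) = fun x y => herm (vdelb g x y) (h x y) + herm (g x y) (vdel h x y).
Proof.
move=> hg hh.
have sc : forall i, smooth (fun x y => conjc (g x y i) * h x y i).
  by move=> i; apply: smoothM; [exact: smoothJ | exact: hh].
rewrite /hermF /herm.
rewrite (@del_sum _ _ (fun i x y => conjc (g x y i) * h x y i)) //.
apply: funext2 => x y; rewrite -big_split /=; apply: eq_bigr => i _.
rewrite (delM (smoothJ (hg i)) (hh i)) (delJ (hg i)) /=.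
by rewrite /vdelb /vdel.
Qed.
Lemma delb_herm g h : smoothv g -> smoothv h ->
  delb (hermF g h) = fun x y => herm (vdel g x y) (h x y) + herm (g x y) (vdelb h x y).
Proof.
move=> hg hh.
have sc : forall i, smooth (fun x y => conjc (g x y i) * h x y i).
  by move=> i; apply: smoothM; [exact: smoothJ | exact: hh].
rewrite /hermF /herm.
rewrite (@delb_sum _ _ (fun i x y => conjc (g x y i) * h x y i)) //.
apply: funext2 => x y; rewrite -big_split /=; apply: eq_bigr => i _.
rewrite (delbM (smoothJ (hg i)) (hh i)) (delbJ (hg i)) /=.
by rewrite /vdelb /vdel.
Qed.
End L3.

Section L4.
Variable R : realType.
Variable N : nat.
Local Notation C := R[i].
Local Notation F2 := (R -> R -> C).
Local Notation V2 := (R -> R -> 'I_N -> C).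
Implicit Types g h : V2.

Lemma funext3 g h : (forall x y i, g x y i = h x y i) -> g = h.
Proof.
move=> e; apply: boolp.funext => x; apply: boolp.funext => y; apply: boolp.funext => i; exact: e.
Qed.

Lemma conj_sum (I : Type) (r : seq I) (F : I -> C) :
  conjc (\sum_(i <- r) F i) = \sum_(i <- r) conjc (F i).
Proof.
elim: r => [|a r IH]; first by rewrite !big_nil conjc0.
by rewrite !big_cons conjD IH.
Qed.
Lemma hermC (a b : 'I_N -> C) : herm b a = conjc (herm a b).
Proof.
rewrite /herm conj_sum; apply: eq_bigr => i _.
by rewrite conjM conjcK mulrC.
Qed.
Lemma herm_real (a : 'I_N -> C) : conjc (herm a a) = herm a a.
Proof. by rewrite -hermC. Qed.
Lemma herm_subr (a b c : 'I_N -> C) (s : C) : herm a (fun i => b i - c i * s) = herm a b - herm a c * s.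
Proof.
rewrite /herm mulr_suml -sumrB; apply: eq_bigr => i _.
by rewrite mulrBr mulrA.
Qed.
Lemma herm_subl (a b c : 'I_N -> C) (s : C) : herm (fun i => b i - c i * s) a = herm b a - conjc s * herm c a.
Proof.
rewrite /herm mulr_sumr -sumrB; apply: eq_bigr => i _.
by rewrite conjB conjM mulrBl [conjc (c i) * _]mulrC -mulrA.
Qed.
Lemma herm_addr (a b c : 'I_N -> C) (s : C) : herm a (fun i => b i + s * c i) = herm a b + s * herm a c.
Proof.
rewrite /herm mulr_sumr -big_split; apply: eq_bigr => i _ /=.
by rewrite mulrDr mulrCA.
Qed.
Lemma herm_scaler (a b : 'I_N -> C) (s : C) : herm a (fun i => s * b i) = s * herm a b.
Proof.
rewrite /herm mulr_sumr; apply: eq_bigr => i _.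
by rewrite mulrCA.
Qed.
Lemma herm_scalel (a b : 'I_N -> C) (s : C) : herm (fun i => s * b i) a = conjc s * herm b a.
Proof.
rewrite /herm mulr_sumr; apply: eq_bigr => i _.
by rewrite conjM mulrA.
Qed.

Definition nF g : F2 := hermF g g.
Definition muF g : F2 := fun x y => herm (g x y) (vdel g x y) / herm (g x y) (g x y).

Lemma PplusE g x y : Pplus g x y = (fun i => vdel g x y i - g x y i * muF g x y).
Proof. by []. Qed.

Lemma vdel_vdelb g : smoothv g -> vdelb (vdel g) = vdel (vdelb g).
Proof.
move=> sg; apply: funext3 => x y i.
rewrite /vdelb /vdel.
have -> : (fun x' y' => del (fun x'0 y'0 => g x'0 y'0 i) x' y') = del (fun a b => g a b i) by [].
have -> : (fun x' y' => delb (fun x'0 y'0 => g x'0 y'0 i) x' y') = delb (fun a b => g a b i) by [].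
by rewrite del_delb.
Qed.

Lemma smooth_nF g : smoothv g -> smooth (nF g).
Proof. by move=> sg; apply: smooth_herm. Qed.
Lemma smooth_muF g : smoothv g -> (forall x y, nF g x y != 0) -> smooth (muF g).
Proof.
move=> sg nz; apply: smoothM; first by apply: smooth_herm => //; apply: smoothv_del.
exact: (smoothV nz (smooth_nF sg)).
Qed.
Lemma smoothv_Pplus g : smoothv g -> (forall x y, nF g x y != 0) -> smoothv (Pplus g).
Proof.
move=> sg nz i.
apply: (@smooth_ext _ (fun x y => vdel g x y i - g x y i * muF g x y)) => //.
apply: smoothB; first exact: smoothv_del.
apply: smoothM; [exact: sg | exact: smooth_muF].
Qed.

Lemma del_nF g gp q : smoothv g -> smoothv gp ->
  vdelb g = (fun x y i => - q x y * gp x y i) ->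
  (forall x y, herm (gp x y) (g x y) = 0) ->
  del (nF g) = hermF g (vdel g).
Proof.
move=> sg sgp H1 H2; rewrite /nF (del_herm sg sg) H1.
apply: funext2 => x y; cbv beta.
rewrite (herm_scalel (g x y) (gp x y) (- q x y)) H2 mulr0 add0r.
by [].
Qed.
Lemma delb_nF g gp q : smoothv g -> smoothv gp ->
  vdelb g = (fun x y i => - q x y * gp x y i) ->
  (forall x y, herm (gp x y) (g x y) = 0) ->
  delb (nF g) = fun x y => conjc (hermF g (vdel g) x y).
Proof.
move=> sg sgp H1 H2; rewrite /nF (delb_herm sg sg) H1.
apply: funext2 => x y; cbv beta.
rewrite (herm_scaler (g x y) (gp x y) (- q x y)).
rewrite (hermC (gp x y) (g x y)) H2 conjc0 mulr0 addr0.
by rewrite /hermF hermC.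
Qed.

Section Step.
Variables (g gp : V2) (q : F2).
Hypotheses (sg : smoothv g) (sgp : smoothv gp) (sq : smooth q).
Hypothesis nz : forall x y, nF g x y != 0.
Hypothesis qr : forall x y, conjc (q x y) = q x y.
Hypothesis H1 : vdelb g = (fun x y i => - q x y * gp x y i).
Hypothesis H2 : forall x y, herm (gp x y) (g x y) = 0.
Hypothesis H3 : vdel (vdelb g) = (fun x y i => - q x y * (g x y i + muF g x y * gp x y i)).

Let gn := Pplus g.

Lemma step_smooth : smoothv gn.
Proof. exact: smoothv_Pplus. Qed.

Lemma step_orth x y : herm (g x y) (gn x y) = 0.
Proof.
rewrite /gn PplusE herm_subr /muF.
have := nz x y; rewrite /nF /hermF.
move: (herm (g x y) (g x y)) (herm (g x y) (vdel g x y)) => n h nz'.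
by field.
Qed.

Lemma step_norm x y : nF gn x y = nF g x y * (delb (muF g) x y + q x y).
Proof.
have sn := smooth_nF sg.
have sd := smoothv_del sg.
have sh : smooth (hermF g (vdel g)) by apply: smooth_herm.
have sV := smoothV nz sn.
have -> : muF g = fun x y => hermF g (vdel g) x y * (nF g x y)^-1 by [].
rewrite (delbM sh sV) (delbV nz sn) (delb_nF sg sgp H1 H2).
rewrite /hermF (delb_herm sg sd) (vdel_vdelb sg) H3.
rewrite herm_scaler.
have e1 : herm (g x y) (fun i => g x y i + muF g x y * gp x y i) = nF g x y.
  rewrite herm_addr (hermC (gp x y) (g x y)) H2 conjc0 mulr0 addr0.
  by [].
rewrite e1 /nF /hermF /gn PplusE.
rewrite herm_subl !herm_subr.
rewrite (hermC (g x y) (vdel g x y)).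
have hn := nz x y; move: hn; rewrite /nF /hermF => hn.
have cn := herm_real (g x y).
rewrite /muF conjM conjV cn.
move: hn cn.
move: (herm (g x y) (g x y)) (herm (g x y) (vdel g x y)) (herm (vdel g x y) (vdel g x y)) => n h d hn cn.
by field.
Qed.

Lemma step_delb : vdelb gn = (fun x y i => - (nF gn x y / nF g x y) * g x y i).
Proof.
have sm := smooth_muF sg nz.
apply: funext3 => x y i.
rewrite /vdelb /gn.
have -> : (fun x' y' => Pplus g x' y' i) = (fun x' y' => vdel g x' y' i - g x' y' i * muF g x' y') by [].
rewrite (delbD (smoothv_del sg i) (smoothN (smoothM (sg i) sm))).
rewrite (delbN (smoothM (sg i) sm)) (delbM (sg i) sm).
have e1 : delb (fun a b => vdel g a b i) x y = vdel (vdelb g) x y i.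
  by rewrite -(vdel_vdelb sg).
have e2 : delb (fun a b => g a b i) x y = vdelb g x y i by [].
rewrite e1 e2 H3 H1 step_norm.
have hn := nz x y.
move: hn; move: (nF g x y) (muF g x y) (delb (muF g) x y) (q x y) (g x y i) (gp x y i) => n m dm qq a b hn.
by field.
Qed.

Hypothesis nzn : forall x y, nF gn x y != 0.

Lemma step_H3 : vdel (vdelb gn) =
  (fun x y i => - (nF gn x y / nF g x y) * (gn x y i + muF gn x y * g x y i)).
Proof.
have sgn := step_smooth.
have snn := smooth_nF sgn.
have sn := smooth_nF sg.
have sV := smoothV nz sn.
apply: funext3 => x y i.
rewrite step_delb /vdel.
rewrite (delM (smoothN (smoothM snn sV)) (sg i)).
rewrite (delN (smoothM snn sV)) (delM snn sV) (delV nz sn).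
have Hn := del_nF sg sgp H1 H2.
have Hnn := del_nF sgn sg step_delb step_orth.
rewrite Hn Hnn.
have e : del (fun a b => g a b i) x y = gn x y i + g x y i * muF g x y.
  by rewrite /gn PplusE; rewrite subrK.
rewrite e /gn /muF /nF /hermF.
have hn := nz x y; have hnn := nzn x y.
move: hn hnn; rewrite /nF /hermF /gn.
move: (herm (g x y) (g x y)) (herm (Pplus g x y) (Pplus g x y)) (herm (g x y) (vdel g x y))
  (herm (Pplus g x y) (vdel (Pplus g) x y)) (Pplus g x y i) (g x y i) => n nn h hh a b hn hnn.
by field; rewrite hnn hn.
Qed.
End Step.

Lemma orth_step g w w' (c : F2) : smoothv g -> smoothv w ->
  vdelb w = (fun x y i => c x y * w' x y i) ->
  (forall x y, herm (w' x y) (g x y) = 0) ->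
  (forall x y, herm (w x y) (g x y) = 0) ->
  forall x y, herm (w x y) (Pplus g x y) = 0.
Proof.
move=> sg sw Hw H' H0 x y.
rewrite PplusE herm_subr H0 mul0r subr0.
have e : hermF w g = fun _ _ => 0 by apply: funext2 => a b; exact: H0.
have := del_herm sw sg.
rewrite e del_cst Hw => /(congr1 (fun f => f x y)) /=.
rewrite herm_scalel H' mulr0 add0r.
by move=> <-.
Qed.
End L4.

Section L5.
Variable R : realType.
Local Notation C := R[i].
Local Notation F2 := (R -> R -> C).
Implicit Types F G : F2.
Local Notation Z := (@Z R).
Local Notation Zb := (@Zb R).
Local Notation smoothZ := (@smoothZ R).
Local Notation smoothZb := (@smoothZb R).
Local Notation del_Z := (@del_Z R).
Local Notation del_Zb := (@del_Zb R).
Local Notation delb_Z := (@delb_Z R).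
Local Notation delb_Zb := (@delb_Zb R).

Lemma delX F n : smooth F ->
  del (fun x y => F x y ^+ n) = fun x y => n%:R * F x y ^+ n.-1 * del F x y.
Proof.
move=> hF; elim: n => [|n IH].
  have -> : (fun x y => F x y ^+ 0) = (fun _ _ => 1) by apply: funext2 => x y; rewrite expr0.
  by rewrite del_cst; apply: funext2 => x y; rewrite !mul0r.
have -> : (fun x y => F x y ^+ n.+1) = (fun x y => F x y * F x y ^+ n)
  by apply: funext2 => x y; rewrite exprS.
rewrite (delM hF (smoothX n hF)) IH; apply: funext2 => x y; cbv beta.
case: n {IH} => [|n] /=.
  rewrite !expr0; ring.
rewrite exprS; ring.
Qed.
Lemma delbX F n : smooth F ->
  delb (fun x y => F x y ^+ n) = fun x y => n%:R * F x y ^+ n.-1 * delb F x y.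
Proof.
move=> hF; elim: n => [|n IH].
  have -> : (fun x y => F x y ^+ 0) = (fun _ _ => 1) by apply: funext2 => x y; rewrite expr0.
  by rewrite delb_cst; apply: funext2 => x y; rewrite !mul0r.
have -> : (fun x y => F x y ^+ n.+1) = (fun x y => F x y * F x y ^+ n)
  by apply: funext2 => x y; rewrite exprS.
rewrite (delbM hF (smoothX n hF)) IH; apply: funext2 => x y; cbv beta.
case: n {IH} => [|n] /=.
  rewrite !expr0; ring.
rewrite exprS; ring.
Qed.

Definition Hr (x y : R) : R := 1 + x ^+ 2 + y ^+ 2.
Definition H : F2 := fun x y => (Hr x y)%:C.
Lemma Hr_gt0 x y : 0 < Hr x y.
Proof. rewrite /Hr; have := sqr_ge0 x; have := sqr_ge0 y; lra. Qed.
Lemma H_nz x y : H x y != 0.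
Proof.
rewrite /H; apply/negP => /eqP e.
have := Hr_gt0 x y; rewrite lt0r => /andP [/negP h _]; apply: h.
by apply/eqP; move: e => [].
Qed.
Lemma ZZb x y : Z x y * Zb x y = (x ^+ 2 + y ^+ 2)%:C.
Proof.
rewrite /Zb /Z /=; apply/eqP; rewrite eq_complex /=; apply/andP; split; apply/eqP; ring.
Qed.
Lemma HE : H = fun x y => 1 + Z x y * Zb x y.
Proof.
apply: funext2 => x y; rewrite ZZb /H /Hr.
apply/eqP; rewrite eq_complex /=; apply/andP; split; apply/eqP; ring.
Qed.
Lemma smoothH : smooth H.
Proof. rewrite HE; apply: smoothD; [exact: smooth_cst | exact: smoothM smoothZ smoothZb]. Qed.
Lemma del_H : del H = Zb.
Proof.
rewrite HE (delD (smooth_cst _) (smoothM smoothZ smoothZb)) (delM smoothZ smoothZb).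
rewrite del_cst del_Z del_Zb; apply: funext2 => x y; cbv beta; ring.
Qed.
Lemma delb_H : delb H = Z.
Proof.
rewrite HE (delbD (smooth_cst _) (smoothM smoothZ smoothZb)) (delbM smoothZ smoothZb).
rewrite delb_cst delb_Z delb_Zb; apply: funext2 => x y; cbv beta; ring.
Qed.
Lemma smoothHi : smooth (fun x y => (H x y)^-1).
Proof. exact: smoothV H_nz smoothH. Qed.
Lemma del_Hi : del (fun x y => (H x y)^-1) = fun x y => - Zb x y * ((H x y)^-1 * (H x y)^-1).
Proof. by rewrite (delV H_nz smoothH) del_H. Qed.
Lemma delb_Hi : delb (fun x y => (H x y)^-1) = fun x y => - Z x y * ((H x y)^-1 * (H x y)^-1).
Proof. by rewrite (delbV H_nz smoothH) delb_H. Qed.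
Lemma conjH x y : conjc (H x y) = H x y.
Proof. exact: conjR. Qed.
Lemma H1ZZb x y : H x y - Z x y * Zb x y = 1.
Proof. by rewrite HE addrK. Qed.

Lemma predpow (a : C) n : a != 0 -> n%:R * a ^+ n.-1 = n%:R * a ^+ n * a^-1.
Proof.
move=> a0; case: n => [|n] /=; first by rewrite !mul0r.
rewrite exprS; move: (a ^+ n) => b. by field; rewrite ?a0.
Qed.

Variable m : nat.
Definition dR (k : nat) : R := k.+1%:R * (m%:R - k%:R).
Definition ddR (k : nat) : R := if k is k'.+1 then dR k' else 0.
Definition cR (k : nat) : R := \prod_(j < k) dR j.
Definition E (k : nat) : F2 := fun x y => (cR k)%:C * (H x y ^+ m * (H x y)^-1 ^+ (2 * k)).
Definition qq (k : nat) : F2 := fun x y => (ddR k)%:C * (H x y)^-1 * (H x y)^-1.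

Lemma dR_gt0 k : (k < m)%N -> 0 < dR k.
Proof.
move=> km; rewrite /dR; apply: mulr_gt0; first by rewrite ltr0n.
by rewrite subr_gt0 ltr_nat.
Qed.
Lemma cR_gt0 k : (k <= m)%N -> 0 < cR k.
Proof.
move=> km; rewrite /cR; apply: prodr_gt0 => j _; apply: dR_gt0.
exact: leq_trans (ltn_ord j) km.
Qed.
Lemma cRS k : cR k.+1 = cR k * dR k.
Proof. by rewrite /cR big_ord_recr. Qed.
Lemma dd_id k : m%:R - (2 * k)%:R + ddR k = dR k :> R.
Proof.
rewrite /dR; case: k => [|k] /=; first by rewrite muln0 subr0 addr0 mul1r.
rewrite /dR natrM; ring.
Qed.

Lemma smoothE k : smooth (E k).
Proof.
apply: smoothM; first exact: smooth_cst.
apply: smoothM; [exact: smoothX smoothH | exact: smoothX smoothHi].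
Qed.
Lemma E_nz k : (k <= m)%N -> forall x y, E k x y != 0.
Proof.
move=> km x y; rewrite /E; apply: mulf_neq0.
  have := cR_gt0 km; rewrite lt0r => /andP [h _].
  by apply: contra h => /eqP [] ->.
apply: mulf_neq0; apply: expf_neq0; first exact: H_nz.
by rewrite invr_eq0; exact: H_nz.
Qed.
Lemma delE_k k : del (E k) =
  fun x y => E k x y * ((m%:R - (2 * k)%:R) * (Zb x y * (H x y)^-1)).
Proof.
rewrite /E (delM (smooth_cst _) (smoothM (smoothX m smoothH) (smoothX (2 * k) smoothHi))).
rewrite del_cst (delM (smoothX m smoothH) (smoothX (2 * k) smoothHi)).
rewrite (delX m smoothH) (delX (2 * k) smoothHi) del_H del_Hi.
apply: funext2 => x y; cbv beta.
have a0 := H_nz x y.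
have ai0 : (H x y)^-1 != 0 by rewrite invr_eq0.
rewrite (predpow m a0) (predpow (2 * k) ai0) invrK.
move: a0; move: (H x y) (Zb x y) (H x y ^+ m) ((H x y)^-1 ^+ (2 * k)) (cR k)%:C => a b P Q c a0.
by field.
Qed.
Lemma delbE_mu k : delb (fun x y => (m%:R - (2 * k)%:R) * (Zb x y * (H x y)^-1)) =
  fun x y => (m%:R - (2 * k)%:R) * ((H x y)^-1 * (H x y)^-1).
Proof.
rewrite (delbM (smooth_cst _) (smoothM smoothZb smoothHi)) delb_cst.
rewrite (delbM smoothZb smoothHi) delb_Zb delb_Hi.
apply: funext2 => x y; cbv beta.
have a0 := H_nz x y.
have e := H1ZZb x y.
have -> : 1 * (H x y)^-1 + Zb x y * (- Z x y * ((H x y)^-1 * (H x y)^-1)) =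
  (H x y - Z x y * Zb x y) * ((H x y)^-1 * (H x y)^-1).
  by move: a0; move: (H x y) (Z x y) (Zb x y) => a z zb a0; field.
by rewrite e mul0r add0r mul1r.
Qed.
End L5.

Section L6.
Variable R : realType.
Variable m : nat.
Local Notation C := R[i].
Local Notation F2 := (R -> R -> C).
Local Notation V2 := (R -> R -> 'I_m.+1 -> C).
Local Notation Z := (@Z R).
Local Notation Zb := (@Zb R).
Local Notation H := (@H R).
Local Notation E := (@E R m).
Local Notation qq := (@qq R m).
Local Notation dR := (@dR R m).
Local Notation ddR := (@ddR R m).
Local Notation cR := (@cR R m).

Definition f (k : nat) : V2 := @Pk R m.+1 k.
Definition zv : V2 := fun _ _ _ => 0.
Definition gpk (k : nat) : V2 := if k is k'.+1 then f k' else zv.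

Lemma RCD (a b : R) : (a + b)%:C = a%:C + b%:C :> C.
Proof. by apply/eqP; rewrite eq_complex /= addr0 !eqxx. Qed.
Lemma RCM (a b : R) : (a * b)%:C = a%:C * b%:C :> C.
Proof. by apply/eqP; rewrite eq_complex /= !mulr0 !mul0r subr0 addr0 !eqxx. Qed.
Lemma RCB (a b : R) : (a - b)%:C = a%:C - b%:C :> C.
Proof. by apply/eqP; rewrite eq_complex /= subr0 !eqxx. Qed.
Lemma RCn (n : nat) : (n%:R : R)%:C = n%:R :> C.
Proof.
elim: n => [|n IH]; first by [].
by rewrite -addn1 !natrD RCD IH.
Qed.

Lemma smoothv_zv : smoothv zv.
Proof. by move=> i; exact: smooth_cst. Qed.
Lemma herm_zv (v : 'I_m.+1 -> C) : herm (fun _ => 0) v = 0.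
Proof. by rewrite /herm big1 // => i _; rewrite conjc0 mul0r. Qed.

Lemma conjX (a : C) n : conjc (a ^+ n) = (conjc a) ^+ n.
Proof. elim: n => [|n IH]; [by rewrite !expr0 conjc1 | by rewrite !exprS conjM IH]. Qed.

Local Notation sq i := (Num.sqrt ('C(m, i))%:R : R).

Lemma f0_comp (i : 'I_m.+1) :
  (fun x y => f 0 x y i) = fun x y => (sq i)%:C * Z x y ^+ i.
Proof. by []. Qed.
Lemma smoothv_f0 : smoothv (f 0).
Proof.
move=> i; rewrite f0_comp; apply: smoothM; first exact: smooth_cst.
exact: smoothX (@smoothZ R).
Qed.
Lemma vdelb_f0 : vdelb (f 0) = fun _ _ _ => 0.
Proof.
apply: funext3 => x y i; rewrite /vdelb -/(f 0) f0_comp.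
rewrite (delbM (smooth_cst _) (smoothX i (@smoothZ R))) delb_cst (delbX i (@smoothZ R)) delb_Z.
by rewrite /= !mulr0 mul0r add0r.
Qed.
Lemma nF_f0 x y : nF (f 0) x y = E 0 x y.
Proof.
rewrite /nF /hermF /herm /E /cR big_ord0 mul1r muln0 expr0 mulr1.
have -> : H x y = Zb x y * Z x y + 1 by rewrite HE addrC mulrC.
rewrite exprD1n; apply: eq_bigr => i _.
have -> : f 0 x y i = (sq i)%:C * Z x y ^+ i by [].
rewrite conjM conjR conjX -/(Zb x y) mulrACA -RCM -expr2 sqr_sqrtr ?ler0n //.
by rewrite RCn exprMn mulr_natl mulrC.
Qed.

Record Inv (k : nat) : Prop := MkInv {
  inv1 : smoothv (f k);
  inv2 : smoothv (gpk k);
  inv3 : forall x y, nF (f k) x y = E k x y;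
  inv4 : vdelb (f k) = (fun x y i => - qq k x y * gpk k x y i);
  inv5 : forall x y, herm (gpk k x y) (f k x y) = 0;
  inv6 : vdel (vdelb (f k)) = (fun x y i => - qq k x y * (f k x y i + muF (f k) x y * gpk k x y i));
  inv7 : forall j, (j < k)%N -> forall x y, herm (f j x y) (f k x y) = 0 }.

Lemma Inv0 : Inv 0.
Proof.
split => //.
- exact: smoothv_f0.
- exact: smoothv_zv.
- exact: nF_f0.
- rewrite vdelb_f0; apply: funext3 => x y i; by rewrite /gpk /zv mulr0.
- by move=> x y; exact: herm_zv.
- rewrite vdelb_f0; apply: funext3 => x y i.
  rewrite /vdel del_cst /qq /ddR /= mul0r mul0r oppr0 mul0r.
  by [].
Qed.

Lemma E_ratio k x y : E k.+1 x y = E k x y * ((dR k)%:C * (H x y)^-1 * (H x y)^-1).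
Proof.
rewrite /E cRS RCM mulnS exprD expr2.
move: (cR k)%:C (dR k)%:C (H x y ^+ m) ((H x y)^-1) ((H x y)^-1 ^+ (2 * k)) => a b c d e.
ring.
Qed.

Lemma Inv_step k : (k < m)%N -> (forall j, (j <= k)%N -> Inv j) -> Inv k.+1.
Proof.
move=> km IH.
have [sg sgp nE H1 H2 H3 Ho] := IH k (leqnn k).
have nz : forall x y, nF (f k) x y != 0.
  by move=> x y; rewrite nE; apply: E_nz; exact: ltnW.
have nEf : nF (f k) = E k by apply: funext2.
have Hmu : muF (f k) = fun x y => (m%:R - (2 * k)%:R) * (Zb x y * (H x y)^-1).
  apply: funext2 => x y.
  have e1 : muF (f k) x y = del (nF (f k)) x y / nF (f k) x y.
    by rewrite (del_nF sg sgp H1 H2).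
  rewrite e1 nEf (delE_k R m k).
  have := E_nz (ltnW km) x y.
  move: (E k x y) ((m%:R - (2 * k)%:R) * (Zb x y * (H x y)^-1)) => a b a0.
  by field.
have Hn1 : forall x y, nF (f k.+1) x y = E k.+1 x y.
  move=> x y.
  rewrite (step_norm sg sgp nz H1 H2 H3 x y) Hmu (delbE_mu R m k) nEf E_ratio.
  rewrite /qq -(dd_id R m k) RCD RCB !RCn.
  congr (_ * _); ring.
have nzn : forall x y, nF (f k.+1) x y != 0.
  by move=> x y; rewrite Hn1; apply: E_nz.
have ratio : forall x y, nF (f k.+1) x y / nF (f k) x y = qq k.+1 x y.
  move=> x y; rewrite Hn1 nE E_ratio /qq /ddR.
  have := E_nz (ltnW km) x y.
  move: (E k x y) (dR k)%:C ((H x y)^-1) => a b c a0.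
  by field.
split.
- exact: step_smooth.
- exact: sg.
- exact: Hn1.
- rewrite (step_delb sg sgp nz H1 H2 H3); apply: funext3 => x y i.
  by rewrite ratio.
- move=> x y; exact: step_orth.
- rewrite (step_H3 sg sgp nz H1 H2 H3 nzn); apply: funext3 => x y i.
  by rewrite ratio.
- move=> j; rewrite ltnS leq_eqVlt => /orP [/eqP -> | jk].
    move=> x y; exact: step_orth.
  have [sj sjp _ Hj1 _ _ _] := IH j (ltnW jk).
  have Hw' : forall a b, herm (gpk j a b) (f k a b) = 0.
    move=> a b; case: j jk {sj sjp Hj1} => [|j] jk /=; first exact: herm_zv.
    apply: Ho; exact: ltnW.
  move=> x y.
  exact: (@orth_step R m.+1 (f k) (f j) (gpk j) (fun x y => - qq j x y) sg sj Hj1 Hw' (Ho j jk) x y).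
Qed.

Lemma Inv_all k : (k <= m)%N -> Inv k.
Proof.
suff : (k <= m)%N -> forall j, (j <= k)%N -> Inv j by move=> h km; exact: h km k (leqnn k).
elim: k => [|k IH] km j jk.
  by move: jk; rewrite leqn0 => /eqP ->; exact: Inv0.
move: jk; rewrite leq_eqVlt => /orP [/eqP -> | jk].
  apply: Inv_step => //; exact: IH (ltnW km).
exact: IH (ltnW km) j jk.
Qed.
End L6.

Section L7.
Variable R : realType.
Variable n : nat.
Local Notation m := n.+1.
Local Notation C := R[i].
Local Notation F2 := (R -> R -> C).
Local Notation f := (@f R m).
Local Notation E := (@E R m).
Local Notation H := (@H R).
Local Notation dR := (@dR R m).

Lemma InvA k : (k <= m)%N -> Inv R m k.
Proof. exact: Inv_all. Qed.

Lemma orth a b x y : (a <= m)%N -> (b <= m)%N -> a != b -> herm (f a x y) (f b x y) = 0.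
Proof.
move=> ha hb neq; case: (ltngtP a b) => [ab|ba|ab].
- exact: (inv7 (InvA hb) ab).
- by rewrite hermC (inv7 (InvA ha) ba) conjc0.
- by rewrite ab eqxx in neq.
Qed.

Lemma nfE k x y : (k <= m)%N -> nF (f k) x y = E k x y.
Proof. by move=> hk; rewrite (inv3 (InvA hk)). Qed.
Lemma nzf k x y : (k <= m)%N -> nF (f k) x y != 0.
Proof. by move=> hk; rewrite nfE //; apply: E_nz. Qed.
Lemma nzfF k : (k <= m)%N -> forall x y, nF (f k) x y != 0.
Proof. by move=> hk x y; exact: nzf. Qed.

Definition PE k (i j : 'I_m.+1) : F2 := fun x y => f k x y i * conjc (f k x y j) * (nF (f k) x y)^-1.
Definition AA k (i j : 'I_m.+1) : F2 := fun x y => f k.+1 x y i * conjc (f k x y j) * (nF (f k) x y)^-1.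
Definition Ap k (i j : 'I_m.+1) : F2 := fun x y => if k is k'.+1 then AA k' i j x y else 0.

Lemma smooth_PE k i j : (k <= m)%N -> smooth (PE k i j).
Proof.
move=> hk; have sg := inv1 (InvA hk).
apply: smoothM; first by apply: smoothM; [exact: sg | apply: smoothJ; exact: sg].
exact: smoothV (nzfF hk) (smooth_nF sg).
Qed.
Lemma PE_conj k i j x y : conjc (PE k i j x y) = PE k j i x y.
Proof.
rewrite /PE !conjM conjcK conjV /nF /hermF herm_real.
by rewrite [conjc (f k x y i) * _]mulrC.
Qed.

Lemma qq_real k x y : conjc (@qq R m k x y) = @qq R m k x y.
Proof. by rewrite /qq !conjM conjR conjV conjH. Qed.

Lemma del_PE k i j : (k < m)%N -> del (PE k i j) = fun x y => AA k i j x y - Ap k i j x y.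
Proof.
move=> km; have hk := ltnW km.
have [sg sgp nE H1 H2 H3 Ho] := InvA hk.
have nz := nzfF hk.
have sn := smooth_nF sg.
rewrite /PE (delM (smoothM (sg i) (smoothJ (sg j))) (smoothV nz sn)).
rewrite (delM (sg i) (smoothJ (sg j))) (delJ (sg j)) (delV nz sn) (del_nF sg sgp H1 H2).
apply: funext2 => x y; cbv beta.
have e1 : del (fun a b => f k a b i) x y = f k.+1 x y i + f k x y i * muF (f k) x y.
  have -> : f k.+1 x y i = vdel (f k) x y i - f k x y i * muF (f k) x y by [].
  by rewrite subrK.
have e2 : delb (fun a b => f k a b j) x y = - @qq R m k x y * @gpk R m k x y j.
  exact: (congr1 (fun F => F x y j) H1).
rewrite e1 e2 conjM conjN qq_real /AA /Ap /muF.
have hn := nz x y.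
case: k km hk sg sgp nE H1 H2 H3 Ho nz sn e1 e2 hn => [|k] km hk sg sgp nE H1 H2 H3 Ho nz sn e1 e2 hn.
  have -> : @qq R m 0 x y = 0 by rewrite /qq /ddR; rewrite -[(0 : R)%:C]/(0 : C) !mul0r.
  move: hn; rewrite /nF /hermF.
  move: (herm (f 0 x y) (f 0 x y)) (herm (f 0 x y) (vdel (f 0) x y)) (f 1 x y i) (f 0 x y i) (conjc (f 0 x y j)) (conjc (@gpk R m 0 x y j)) => nn h a b c d hn.
  by field; rewrite hn.
have hk' : (k <= m)%N by apply: ltnW.
have nk := nzf x y hk'.
have Eq : nF (f k.+1) x y = nF (f k) x y * ((dR k)%:C / H x y / H x y).
  by rewrite !nfE // E_ratio.
have hH := H_nz x y.
have hd : (dR k)%:C != 0 :> C.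
  have := dR_gt0 R (ltnW km); rewrite lt0r => /andP [h _].
  by apply: contra h => /eqP [] ->.
have -> : @qq R m k.+1 x y = (dR k)%:C / H x y / H x y by [].
have -> : @gpk R m k.+1 x y j = f k x y j by [].
have -> : AA k i j x y = f k.+1 x y i * conjc (f k x y j) * (nF (f k) x y)^-1 by [].
move: hn nk Eq hH hd; rewrite /nF /hermF.
move: (herm (f k.+1 x y) (f k.+1 x y)) (herm (f k x y) (f k x y)) (herm (f k.+1 x y) (vdel (f k.+1) x y))
  (f k.+2 x y i) (f k.+1 x y i) (conjc (f k.+1 x y j)) (conjc (f k x y j)) (H x y) (dR k)%:C => n1 n0 h a b c d hh dd hn nk Eq hH hd.
rewrite Eq.
by field; rewrite ?hH ?hd ?nk.
Qed.
End L7.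

Section L8.
Variable R : realType.
Local Notation C := R[i].

Lemma sbp (a b : nat -> C) p :
  \sum_(k < p.+1) a k * (b k - (if nat_of_ord k is k'.+1 then b k' else 0)) =
  \sum_(k < p.+1) (a k - a k.+1) * b k + a p.+1 * b p.
Proof.
elim: p => [|p IH]; first by rewrite !big_ord1 /=; ring.
rewrite big_ord_recr [in RHS]big_ord_recr /= IH /=; ring.
Qed.

Lemma sum4 (p q : nat) (X Y : 'I_p -> 'I_q -> 'I_q -> C) :
  \sum_(i < q) \sum_(l < q) ((\sum_(j < p) X j i l) * (\sum_(k < p) Y k l i)) =
  \sum_(j < p) \sum_(k < p) \sum_(i < q) \sum_(l < q) X j i l * Y k l i.
Proof.
transitivity (\sum_(i < q) \sum_(l < q) \sum_(j < p) \sum_(k < p) X j i l * Y k l i).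
  apply: eq_bigr => i _; apply: eq_bigr => l _; rewrite big_distrl /=.
  by apply: eq_bigr => j _; rewrite big_distrr.
transitivity (\sum_(i < q) \sum_(j < p) \sum_(l < q) \sum_(k < p) X j i l * Y k l i).
  by apply: eq_bigr => i _; rewrite exchange_big.
rewrite exchange_big; apply: eq_bigr => j _.
transitivity (\sum_(i < q) \sum_(k < p) \sum_(l < q) X j i l * Y k l i).
  by apply: eq_bigr => i _; rewrite exchange_big.
by rewrite exchange_big.
Qed.

Lemma tr_rank1 (N : nat) (u v w z : 'I_N -> C) (s t c1 c2 : C) :
  \sum_(i < N) \sum_(l < N) ((c1 * (u i * conjc (v l) * s)) * (c2 * (w l * conjc (z i) * t))) =
  herm v w * herm z u * (s * t * (c1 * c2)).
Proof.
rewrite /herm mulr_suml big_distrl /= exchange_big.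
apply: eq_bigr => i _.
rewrite big_distrr /= big_distrl /=.
apply: eq_bigr => l _.
ring.
Qed.

Lemma tr_rank1c (N : nat) (u v w z : 'I_N -> C) (s t c1 c2 : C) :
  \sum_(i < N) \sum_(l < N) ((c1 * (u i * conjc (v l) * s)) * (c2 * conjc (w i * conjc (z l) * t))) =
  herm w u * herm v z * (s * conjc t * (c1 * c2)).
Proof.
rewrite /herm mulr_suml big_distrl /=.
apply: eq_bigr => i _.
rewrite big_distrr /= big_distrl /=.
apply: eq_bigr => l _.
rewrite !conjM conjcK.
ring.
Qed.

Lemma tr_mul (N : nat) (A B : 'M[C]_N) : \tr (A *m B) = \sum_(i < N) \sum_(l < N) A i l * B l i.
Proof. by rewrite /mxtrace; apply: eq_bigr => i _; rewrite mxE. Qed.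
End L8.

Section L9.
Variable R : realType.
Variable n : nat.
Local Notation m := n.+1.
Local Notation C := R[i].
Local Notation F2 := (R -> R -> C).
Local Notation f := (@f R m).
Local Notation E := (@E R m).
Local Notation H := (@H R).
Local Notation dR := (@dR R m).
Local Notation PE := (@PE R n).
Local Notation AA := (@AA R n).
Variable alpha : 'I_m -> R.
Local Notation M := (@bbP R n.+2 alpha).

Lemma bbP_entry x y i j : M x y i j = \sum_(k < m) (alpha k)%:C * PE k i j x y.
Proof. by rewrite /bbP summxE; apply: eq_bigr => k _; rewrite !mxE. Qed.

Lemma bbP_fun i j : (fun x y => M x y i j) =
  (fun x y => \sum_(k <- index_enum 'I_m) (fun (k : 'I_m) x y => (alpha k)%:C * PE k i j x y) k x y).
Proof. by apply: funext2 => x y; rewrite bbP_entry. Qed.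

Lemma smooth_bbP i j : smooth (fun x y => M x y i j).
Proof.
rewrite bbP_fun; apply: smooth_sum => k.
apply: smoothM; first exact: smooth_cst.
apply: smooth_PE; exact: ltnW (ltn_ord k).
Qed.

Lemma bbP_herm x y i j : M x y j i = conjc (M x y i j).
Proof.
rewrite !bbP_entry conj_sum; apply: eq_bigr => k _.
by rewrite conjM conjR PE_conj.
Qed.

Definition al (k : nat) : R := if (k < m)%N then alpha (inord k) else 0.
Definition beta (k : nat) : R := al k - al k.+1.
Lemma al_ord (k : 'I_m) : al k = alpha k.
Proof. by rewrite /al ltn_ord inord_val. Qed.
Lemma al_m : al m = 0.
Proof. by rewrite /al ltnn. Qed.

Lemma mdel_entry x y i j : mdel M x y i j = \sum_(k < m) (beta k)%:C * AA k i j x y.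
Proof.
rewrite mxE bbP_fun del_sum; last first.
  move=> k; apply: smoothM; first exact: smooth_cst.
  apply: smooth_PE; exact: ltnW (ltn_ord k).
transitivity (\sum_(k < m) (al k)%:C * (AA k i j x y - (if nat_of_ord k is k'.+1 then AA k' i j x y else 0))).
  apply: eq_bigr => k _.
  rewrite (delM (smooth_cst _) (smooth_PE R i j (ltnW (ltn_ord k)))) del_cst.
  rewrite (del_PE R i j (ltn_ord k)) /= mul0r add0r al_ord.
  by case: k => [[|k] hk].
rewrite (sbp (fun k => (al k)%:C) (fun k => AA k i j x y) n) /= al_m mul0r addr0.
apply: eq_bigr => k _.
by rewrite /beta RCB.
Qed.

Lemma mdelb_entry x y i j : mdelb M x y j i = conjc (mdel M x y i j).
Proof.
rewrite !mxE.
have -> : (fun x' y' => M x' y' j i) = (fun x' y' => conjc (M x' y' i j)).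
  by apply: funext2 => a b; rewrite bbP_herm.
by rewrite (delbJ (smooth_bbP i j)).
Qed.

Lemma gpp0 x y : gpp M x y = 0.
Proof.
rewrite /gpp tr_mul.
transitivity (\sum_(i < n.+2) \sum_(l < n.+2)
  ((\sum_(j < m) (beta j)%:C * AA j i l x y) * (\sum_(k < m) (beta k)%:C * AA k l i x y))).
  by apply: eq_bigr => i _; apply: eq_bigr => l _; rewrite !mdel_entry.
rewrite (sum4 (fun (j : 'I_m) i l => (beta j)%:C * AA j i l x y) (fun (k : 'I_m) l i => (beta k)%:C * AA k l i x y)).
apply: big1 => j _; apply: big1 => k _.
rewrite /AA tr_rank1.
have hj : (j <= m)%N := ltnW (ltn_ord j).
have hk : (k <= m)%N := ltnW (ltn_ord k).
have hj1 : (j.+1 <= m)%N := ltn_ord j.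
have hk1 : (k.+1 <= m)%N := ltn_ord k.
case: (eqVneq (j : nat) k.+1) => [ejk | njk].
  rewrite (@orth R n k j.+1 x y hk hj1) ?mulr0 ?mul0r //.
  by rewrite ejk (ltn_eqF (leqW (ltnSn k))).
by rewrite (@orth R n j k.+1 x y hj hk1 njk) !mul0r.
Qed.

Lemma gpm_val x y : gpm M x y =
  (\sum_(k < m) (beta k ^+ 2 * dR k))%:C * ((H x y)^-1 * (H x y)^-1).
Proof.
rewrite /gpm tr_mul.
transitivity (\sum_(i < n.+2) \sum_(l < n.+2)
  ((\sum_(j < m) (beta j)%:C * AA j i l x y) * (\sum_(k < m) (beta k)%:C * conjc (AA k i l x y)))).
  apply: eq_bigr => i _; apply: eq_bigr => l _; rewrite mdelb_entry !mdel_entry conj_sum.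
  by congr (_ * _); apply: eq_bigr => k _; rewrite conjM conjR.
rewrite (sum4 (fun (j : 'I_m) i l => (beta j)%:C * AA j i l x y) (fun (k : 'I_m) l i => (beta k)%:C * conjc (AA k i l x y))).
transitivity (\sum_(j < m) (beta j ^+ 2 * dR j)%:C * ((H x y)^-1 * (H x y)^-1)); last first.
  by rewrite -big_distrl /= -(@big_morph _ _ (fun r : R => r%:C) 0 +%R 0 +%R (@RCD R)).
apply: eq_bigr => j _.
have hj : (j <= m)%N := ltnW (ltn_ord j).
have hj1 : (j.+1 <= m)%N := ltn_ord j.
rewrite (bigD1 j) //= [X in _ + X]big1 ?addr0; last first.
  move=> k nkj; rewrite /AA tr_rank1c.
  have hk : (k <= m)%N := ltnW (ltn_ord k).
  rewrite (@orth R n j k x y hj hk) ?mulr0 ?mul0r //.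
  by rewrite eq_sym.
rewrite /AA tr_rank1c.
rewrite -/(nF (f j.+1) x y) -/(nF (f j) x y) -/(hermF (f j.+1) (f j.+1) x y) -/(hermF (f j) (f j) x y).
rewrite -/(nF (f j.+1) x y) -/(nF (f j) x y).
rewrite !nfE // E_ratio conjV.
have hE := E_nz hj x y.
have cE : conjc (E j x y) = E j x y by rewrite -(nfE x y hj) /nF /hermF herm_real.
rewrite cE (RCM (beta j ^+ 2) (dR j)) expr2 (RCM (beta j) (beta j)).
have hH := H_nz x y.
move: hE hH; move: (E j x y) (H x y) (beta j)%:C (dR j)%:C => e h b d hE hH.
by field; rewrite ?hE ?hH.
Qed.
End L9.

Section L10.
Variable R : realType.
Local Notation C := R[i].
Local Notation F2 := (R -> R -> C).
Local Notation Z := (@Z R).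
Local Notation Zb := (@Zb R).
Local Notation H := (@H R).
Local Notation Hr := (@Hr R).
Local Notation smoothHi := (@smoothHi R).
Local Notation delb_Hi := (@delb_Hi R).
Local Notation del_Hi := (@del_Hi R).
Local Notation smoothZ := (@smoothZ R).
Local Notation del_Z := (@del_Z R).

Lemma RCV (a : R) : (a^-1)%:C = (a%:C)^-1 :> C.
Proof.
case: (eqVneq a 0) => [->|a0]; first by rewrite invr0; apply/eqP; rewrite eq_complex /= !mul0r oppr0 !eqxx.
apply/eqP; rewrite eq_complex /=; apply/andP; split; apply/eqP.
  by field.
ring.
Qed.

Lemma cd_ln (u : R -> R) t : (forall s, 0 < u s) -> derivable u t 1 ->
  Dv (fun s => (ln (u s))%:C) t /\
  cd (fun s => (ln (u s))%:C) t = cd (fun s => (u s)%:C) t / (u t)%:C.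
Proof.
move=> pos du.
have hd := is_derive1_comp (is_derive1_ln (pos t)) (derivableP du).
split.
  split; first exact: (@ex_derive _ _ _ _ _ _ _ hd).
  exact: rdvc.
rewrite /cd /=.
have -> : derive1 (fun s => ln (u s)) t = (u t)^-1 * 'D_1 u t.
  rewrite derive1E.
  have := @derive_val _ _ _ _ _ _ _ hd.
  by move=> <-.
rewrite !rdc -derive1E -RCV.
apply/eqP; rewrite eq_complex /= !mulr0 !mul0r subr0 addr0 !eqxx /=.
by rewrite mulrC eqxx.
Qed.

Lemma delb_ln (u : R -> R -> R) : (forall x y, 0 < u x y) ->
  smooth (fun x y => (u x y)%:C) ->
  delb (fun x y => (ln (u x y))%:C) = fun x y => delb (fun x y => (u x y)%:C) x y / (u x y)%:C.
Proof.
move=> pos su; have d1 := smooth_D1 su.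
apply: funext2 => x y.
have [_ ex] := cd_ln (fun s => pos s y) ((d1 x y).1.1).
have [_ ey] := cd_ln (fun s => pos x s) ((d1 x y).2.1).
rewrite !delbE.
have -> : dx (fun x y => (ln (u x y))%:C) x y = cd (fun s => (ln (u s y))%:C) x by [].
have -> : dy (fun x y => (ln (u x y))%:C) x y = cd (fun s => (ln (u x s))%:C) y by [].
rewrite ex ey.
have -> : dx (fun x y => (u x y)%:C) x y = cd (fun s => (u s y)%:C) x by [].
have -> : dy (fun x y => (u x y)%:C) x y = cd (fun s => (u x s)%:C) y by [].
have up := pos x y.
have u0 : (u x y)%:C != 0 :> C.
  by apply/negP => /eqP [] /eqP; rewrite gt_eqF.
move: u0; move: (u x y)%:C (cd (fun s => (u s y)%:C) x) (cd (fun s => (u x s)%:C) y) => a b c a0.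
by field.
Qed.

Variable a : R.
Hypothesis a_gt0 : 0 < a.


Lemma Ga x y : (a / Hr x y ^+ 2)%:C = a%:C * ((H x y)^-1 * (H x y)^-1).
Proof. by rewrite RCM RCV expr2 RCM invfM. Qed.

Lemma curvature_val (N : nat) (M : R -> R -> 'M[C]_N) :
  (forall x y, gpm M x y = (a / Hr x y ^+ 2)%:C) ->
  forall x y, curvature M x y = (8%:R / a)%:C.
Proof.
move=> hG x y.
have eG : gpm M = fun x y => (a / Hr x y ^+ 2)%:C by apply: funext2.
rewrite /curvature eG.
have pos : forall x y, 0 < a / Hr x y ^+ 2.
  by move=> x' y'; apply: divr_gt0 => //; apply: exprn_gt0; apply: Hr_gt0.
have sU : smooth (fun x y => (a / Hr x y ^+ 2)%:C).
  apply: (@smooth_ext _ (fun x y => a%:C * ((H x y)^-1 * (H x y)^-1))).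
    by move=> x' y'; rewrite Ga.
  apply: smoothM; first exact: smooth_cst.
  by apply: smoothM; exact: smoothHi.
have -> : (fun x' y' => (ln (complex.Re ((a / Hr x' y' ^+ 2)%:C)))%:C) =
  (fun x' y' => (ln (a / Hr x' y' ^+ 2))%:C) by [].
rewrite (delb_ln pos sU).
have eU : (fun x y => (a / Hr x y ^+ 2)%:C) = (fun x y => a%:C * ((H x y)^-1 * (H x y)^-1)).
  by apply: funext2 => x' y'; rewrite Ga.
rewrite eU (delbM (smooth_cst _) (smoothM smoothHi smoothHi)) delb_cst.
rewrite (delbM smoothHi smoothHi) delb_Hi.
have -> : (fun x y => (0 * ((H x y)^-1 * (H x y)^-1) + a%:C *
        (- Z x y * ((H x y)^-1 * (H x y)^-1) * (H x y)^-1 +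
         (H x y)^-1 * (- Z x y * ((H x y)^-1 * (H x y)^-1)))) / (a / Hr x y ^+ 2)%:C) =
  (fun x y => (-2%:R) * (Z x y * (H x y)^-1)).
  apply: funext2 => x' y'; rewrite Ga.
  have h0 := H_nz x' y'.
  have a0 : a%:C != 0 :> C by apply/negP => /eqP [] /eqP; rewrite gt_eqF.
  move: h0 a0; move: (H x' y') (Z x' y') a%:C => h z c h0 a0.
  by field; rewrite ?h0 ?a0.
rewrite (delM (smooth_cst _) (smoothM smoothZ smoothHi)) del_cst.
rewrite (delM smoothZ smoothHi) del_Z del_Hi /=.
rewrite Ga RCM RCV RCn.
have e := H1ZZb x y.
have h0 := H_nz x y.
have a0 : a%:C != 0 :> C by apply/negP => /eqP [] /eqP; rewrite gt_eqF.
have -> : 1 * (H x y)^-1 + Z x y * (- Zb x y * ((H x y)^-1 * (H x y)^-1)) =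
  (H x y - Z x y * Zb x y) * ((H x y)^-1 * (H x y)^-1).
  by move: h0; move: (H x y) (Z x y) (Zb x y) => h z zb h0; field.
rewrite e.
move: h0 a0; move: (H x y) a%:C => h c h0 a0.
by field; rewrite ?h0 ?a0.
Qed.
End L10.

Section L11.
Variable R : realType.
Variable n : nat.
Variable alpha : 'I_n.+1 -> R.

Lemma al_zero : (forall k : 'I_n.+1, beta alpha k = 0) -> forall i, (i <= n.+1)%N -> al alpha (n.+1 - i) = 0.
Proof.
move=> hb; elim=> [|i IH] hi; first by rewrite subn0 al_m.
have hlt : (n.+1 - i.+1 < n.+1)%N by rewrite subnS prednK ?subn_gt0 // leq_subr.
have := hb (Ordinal hlt); rewrite /beta /=.
have -> : ((n.+1 - i.+1).+1 = n.+1 - i)%N by rewrite subnS prednK // subn_gt0.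
rewrite (IH (ltnW hi)) subr0 => ->; done.
Qed.

Lemma a_pos : (exists k, alpha k != 0) -> 0 < \sum_(k < n.+1) beta alpha k ^+ 2 * dR R n.+1 k.
Proof.
move=> [k0 hk0].
have ge : forall k : 'I_n.+1, 0 <= beta alpha k ^+ 2 * dR R n.+1 k.
  by move=> k; apply: mulr_ge0; [exact: sqr_ge0 | apply: ltW; apply: dR_gt0].
case: (boolP [exists k : 'I_n.+1, beta alpha k != 0]) => [/existsP [k hk] | /existsPn hall].
  rewrite (bigD1 k) //=.
  have h1 : 0 < beta alpha k ^+ 2 * dR R n.+1 k.
    apply: mulr_gt0; last exact: dR_gt0.
    by rewrite lt_def sqr_ge0 sqrf_eq0 hk.
  have h2 : 0 <= \sum_(i < n.+1 | i != k) beta alpha i ^+ 2 * dR R n.+1 i.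
    by apply: sumr_ge0 => i _; exact: ge.
  lra.
exfalso; move: hk0; apply/negP; rewrite negbK.
have hb : forall k : 'I_n.+1, beta alpha k = 0 by move=> k; apply/eqP; move: (hall k); rewrite negbK.
have := al_zero hb (leq_subr k0 n.+1).
rewrite subKn; last exact: ltnW (ltn_ord k0).
by rewrite al_ord => ->.
Qed.
End L11.

Unset Implicit Arguments.
Theorem mainTheorem2 (R : realType) (N : nat) (hN : (2 <= N)%N)
  (alpha : 'I_N.-1 -> R) (halpha : exists k, alpha k != 0) :
  (forall x y : R, gpp (bbP alpha) x y = 0) /\
  exists a : R, 0 < a /\
    (forall x y : R,
       gpm (bbP alpha) x y = (a / (1 + x ^+ 2 + y ^+ 2) ^+ 2)%:C) /\
    (forall x y : R, curvature (bbP alpha) x y = (8%:R / a)%:C).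
Proof.
case: N hN alpha halpha => [|[|n]] // hN alpha halpha.
split; first by move=> x y; exact: gpp0.
set a := \sum_(k < n.+1) beta alpha k ^+ 2 * dR R n.+1 k.
have apos : 0 < a by exact: a_pos.
have hg : forall x y : R, gpm (bbP alpha) x y = (a / (1 + x ^+ 2 + y ^+ 2) ^+ 2)%:C.
  move=> x y; rewrite gpm_val -/a.
  by rewrite -(Ga a x y).
exists a; split => //; split => //.
exact: curvature_val apos _ _ hg.
Qed.
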